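(* A function $\mathbf F:\mathbb N^{d}\to\mathbb R^{d'}$ is computable in polynomial time if and only if there exist $\mathbf f:\mathbb N^{d+1}\to\mathbb Q^{d'}$, with $\mathbf f(\mathbf m,n)$ computable in polynomial time in unary in $n$, and $g:\mathbb N^{d+1}\to\mathbb Q$ such that: $\|\mathbf f(\mathbf m,n)-\mathbf F(\mathbf m)\|\le g(\mathbf m,n)$ for all $\mathbf m,n$; $0\le g(\mathbf m,n)$ and $g(\mathbf m,n)\to0$ as $n\to+\infty$; and $g$ has a uniform polynomial modulus of convergence $p$.
   Context: $\|\cdot\|$ is the sup-norm. Polynomial-time computability is in the sense of computable analysis: $\mathbf F$ is polynomial-time computable if a Turing machine, given $\mathbf m$ (binary) and $n$, outputs dyadics $q$ with $\|q-\mathbf F(\mathbf m)\|\le 2^{-n}$ in time polynomial in $\ell(m_1),\dots,\ell(m_d),n$ ($\ell$ = binary length). $\mathbf f(\mathbf m,n)$ being polynomial-time computable in unary in $n$ means the same with the time bound polynomial in $\ell(m_1),\dots,\ell(m_d)$, $n$ itself, and the output precision. A function $M:\mathbb N\to\mathbb N$ is a uniform modulus of convergence of $g:\mathbb N^{d+1}\to\mathbb R$ (with $g(\mathbf m,n)\to0$ as $n\to\infty$) if for all $\mathbf m$, $n$ and all $i>M(n)$, $\|g(\mathbf m,i)\|\le 2^{-n}$. *)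

(* Defs.v *)
From HB Require Import structures.
From mathcomp Require Import all_boot all_order all_algebra.
From mathcomp Require Import reals.
Set Implicit Arguments. Unset Strict Implicit. Unset Printing Implicit Defensive.
Import Order.TTheory GRing.Theory Num.Theory.
Local Open Scope ring_scope.

(* Binary representation of natural numbers (most significant bit first).
   bits 0 = [:: false], so the binary length l(0) = 1.                *)
Fixpoint bits_aux (fuel n : nat) : seq bool :=
  if fuel is k.+1 then
    (if (n < 2)%N then [:: odd n] else rcons (bits_aux k n./2) (odd n))
  else [::].
Definition bits (n : nat) : seq bool := bits_aux n.+1 n.
Definition blen (n : nat) : nat := size (bits n).

(* The tape alphabet is 'I_(nsym+4), with the
   reserved symbols 0 = blank, 1 = '0', 2 = '1', 3 = '#' (separator);
   states are 'I_(nstate+1), start state ord0, halting state ord_max.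
   A transition gives (new state, written symbol, move right?).       *)
Record TM := {
  tm_nsym : nat;
  tm_nstate : nat;
  tm_delta : 'I_tm_nstate.+1 -> 'I_(tm_nsym.+4) ->
             'I_tm_nstate.+1 * 'I_(tm_nsym.+4) * bool }.

Definition sym (M : TM) := 'I_(tm_nsym M).+4.
Definition blank (M : TM) : sym M := inord 0.
Definition code (M : TM) (c : nat) : sym M := inord c.

(* configuration: state, left part (nearest cell first), head cell, right part *)
Definition config (M : TM) :=
  ('I_(tm_nstate M).+1 * seq (sym M) * sym M * seq (sym M))%type.

Definition tm_step (M : TM) (cf : config M) : config M :=
  let: (q, l, a, r) := cf in
  if q == ord_max then cf else
  let: (q', b, mv) := tm_delta q a in
  if mv then
    match r with [::] => (q', b :: l, blank M, [::])
               | x :: r' => (q', b :: l, x, r') end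
  else
    match l with [::] => (q', [::], blank M, b :: r)
               | x :: l' => (q', l', x, b :: r) end.

Definition tm_init (M : TM) (w : seq nat) : config M :=
  (ord0, [::], head (blank M) (map (code M) w), behead (map (code M) w)).

Definition tm_output (M : TM) (cf : config M) : seq (sym M) :=
  let: (_, _, a, r) := cf in
  take (find (fun x => x == blank M) (a :: r)) (a :: r).

Definition tm_runs (M : TM) (w : seq nat) (t : nat) (v : seq nat) : Prop :=
  let cf := iter t (@tm_step M) (tm_init M w) in
  cf.1.1.1 = ord_max /\ tm_output cf = map (code M) v.

Definition enc_bit (b : bool) : nat := if b then 2%N else 1%N.
Definition enc_bin (n : nat) : seq nat := map enc_bit (bits n).
Definition enc_unary (n : nat) : seq nat := nseq n 2%N.

(* input (m_1,...,m_db ; u_1,...,u_du ; precision p):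
   bin(m_1)#...bin(m_db)# 1^u_1 # ... 1^u_du # 1^p                     *)
Definition enc_input (db du : nat) (ms : db.-tuple nat) (us : du.-tuple nat)
  (p : nat) : seq nat :=
  flatten [seq enc_bin m ++ [:: 3%N] | m <- ms]
  ++ flatten [seq enc_unary u ++ [:: 3%N] | u <- us] ++ enc_unary p.

Definition input_size (db du : nat) (ms : db.-tuple nat) (us : du.-tuple nat)
  (p : nat) : nat :=
  (\sum_(m <- ms) blen m + \sum_(u <- us) u + p)%N.

Definition dyadic := (bool * nat * nat)%type.
Definition dy_val (R : unitRingType) (q : dyadic) : R :=
  (-1) ^+ q.1.1 * (q.1.2)%:R / 2%:R ^+ q.2.
Definition enc_dyadic (q : dyadic) : seq nat :=
  enc_bit q.1.1 :: enc_bin q.1.2 ++ 3%N :: enc_bin q.2 ++ [:: 3%N].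
Definition enc_dyadics (k : nat) (qs : k.-tuple dyadic) : seq nat :=
  flatten [seq enc_dyadic q | q <- qs].

Definition supnorm (R : realDomainType) (k : nat) (v : 'I_k -> R) : R :=
  \big[Num.max/0]_(i < k) `|v i|.

(* Polynomial-time approximability of Phi : N^db x N^du -> R^d', where the
   db arguments are given in binary, the du arguments in unary, and the
   precision p in unary: a TM outputs dyadics q with ||q - Phi|| <= 2^-p in
   time polynomial in l(m_1),...,l(m_db), u_1,...,u_du, p (a polynomial bound
   is expressed as c * (s+1)^c with s the sum of these sizes).          *)
Definition ptime_approx (R : realType) (db du d' : nat)
  (Phi : db.-tuple nat -> du.-tuple nat -> 'I_d' -> R) : Prop :=
  exists (M : TM) (c : nat),
    forall (ms : db.-tuple nat) (us : du.-tuple nat) (p : nat),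
      exists (t : nat) (qs : d'.-tuple dyadic),
        (t <= c * (input_size ms us p).+1 ^ c)%N /\
        tm_runs M (enc_input ms us p) t (enc_dyadics qs) /\
        supnorm (fun i => dy_val R (tnth qs i) - Phi ms us i) <= (2%:R ^+ p)^-1.

Definition ptime_computable (R : realType) (d d' : nat)
  (F : d.-tuple nat -> 'I_d' -> R) : Prop :=
  @ptime_approx R d 0 d' (fun ms _ => F ms).

Definition ptime_computable_unary (R : realType) (d d' : nat)
  (f : d.-tuple nat -> nat -> 'I_d' -> rat) : Prop :=
  @ptime_approx R d 1 d' (fun ms us i => ratr (f ms (tnth us ord0) i)).

Definition tends_to_zero (h : nat -> rat) : Prop :=
  forall eps : rat, 0 < eps -> exists N, forall n, (N <= n)%N -> `|h n| <= eps.

Definition uniform_modulus (d : nat) (g : d.-tuple nat -> nat -> rat)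
  (M : nat -> nat) : Prop :=
  forall m n i, (M n < i)%N -> `|g m i| <= (2%:R ^+ n)^-1.

Definition is_nat_poly (p : nat -> nat) : Prop :=
  exists cs : seq nat, forall n, p n = (\sum_(i < size cs) nth 0 cs i * n ^ i)%N.

(* Main.v *)
Require Import Defs.
From HB Require Import structures.
From mathcomp Require Import all_boot all_order all_algebra.
From mathcomp Require Import reals.
From mathcomp Require Import zify lra.
From Stdlib Require Import ClassicalEpsilon.
Set Implicit Arguments. Unset Strict Implicit. Unset Printing Implicit Defensive.
Import Order.TTheory GRing.Theory Num.Theory.

Module Frame.
Import Order.TTheory GRing.Theory Num.Theory.

Definition ncfg := (nat * seq nat * nat * seq nat)%type.
Definition ndelta := nat -> nat -> nat * nat * bool.

Definition nstep (h : nat) (dn : ndelta) (c : ncfg) : ncfg :=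
  let: (q, l, a, r) := c in
  if q == h then c else
  let: (q', b, mv) := dn q a in
  if mv then (q', b :: l, head 0 r, behead r)
  else (q', behead l, head 0 l, b :: r).

Definition T q l rs : ncfg := (q, l, head 0 rs, behead rs).

Definition projc (M : TM) (c : config M) : ncfg :=
  let: (q, l, a, r) := c in (val q, map val l, val a, map val r).

Definition tdn (M : TM) : ndelta := fun q a =>
  let: (q', b, mv) := @tm_delta M (inord q) (inord a) in (val q', val b, mv).

Lemma val_blank M : val (blank M) = 0.
Proof. exact: inordK. Qed.

Lemma proj_step M (c : config M) :
  projc (tm_step c) = nstep (tm_nstate M) (tdn M) (projc c).
Proof.
case: c => [[[q l] a] r] /=.
have -> : (val q == tm_nstate M) = (q == ord_max) by [].
case: eqP => // _.
rewrite /tdn !inord_val.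
case: (tm_delta q a) => [[q' b] mv].
case: mv; [case: r | case: l] => //=; by rewrite val_blank.
Qed.

Lemma proj_iter M (c : config M) k :
  projc (iter k (@tm_step M) c) = iter k (nstep (tm_nstate M) (tdn M)) (projc c).
Proof. by elim: k => //= k IH; rewrite proj_step IH. Qed.

Definition mkTM (ns nq : nat) (dn : ndelta) : TM :=
  {| tm_nsym := ns; tm_nstate := nq;
     tm_delta := fun q a => let: (q', b, mv) := dn (val q) (val a) in
                 ((inord q' : 'I_nq.+1), (inord b : 'I_ns.+4), mv) |}.

Definition dn_ok (ns nq : nat) (dn : ndelta) :=
  forall q a, q <= nq -> a < ns.+4 -> (dn q a).1.1 <= nq /\ (dn q a).1.2 < ns.+4.

Definition cfg_ok ns nq (c : ncfg) := c.1.1.1 <= nq /\ c.1.2 < ns.+4.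

Lemma proj_ok (M : TM) (c : config M) : cfg_ok (tm_nsym M) (tm_nstate M) (projc c).
Proof. case: c => [[[q l] a] r] /=; split; [exact: (ltn_ord q) | exact: (ltn_ord a)]. Qed.

Lemma mkTM_tdn ns nq dn (c : ncfg) : dn_ok ns nq dn -> cfg_ok ns nq c ->
  nstep nq (tdn (mkTM ns nq dn)) c = nstep nq dn c.
Proof.
move=> ok; case: c => [[[q l] a] r] [/= hq ha].
rewrite /nstep /tdn /=.
case: eqP => // _.
rewrite !inordK //.
have [h1 h2] := ok q a hq ha.
case E: (dn q a) h1 h2 => [[q' b] mv] /= h1 h2.
by rewrite !inordK.
Qed.

Lemma mkTM_iter ns nq dn (c : config (mkTM ns nq dn)) k : dn_ok ns nq dn ->
  projc (iter k (@tm_step _) c) = iter k (nstep nq dn) (projc c).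
Proof.
move=> ok; elim: k => //= k IH.
by rewrite proj_step -IH mkTM_tdn //; apply: (proj_ok (M := mkTM ns nq dn)).
Qed.

Fixpoint rstrip (s : seq nat) : seq nat :=
  if s is x :: s' then
    (let t := rstrip s' in if (x == 0) && (t == [::]) then [::] else x :: t)
  else [::].

Lemma head_rstrip s : head 0 (rstrip s) = head 0 s.
Proof.
case: s => //= x s; case: ifP => //= /andP[/eqP -> _] //.
Qed.

Lemma behead_rstrip s : behead (rstrip s) = rstrip (behead s).
Proof.
case: s => //= x s; case: ifP => //= /andP[_ /eqP ->] //.
Qed.

Definition ceq (c1 c2 : ncfg) :=
  [/\ c1.1.1.1 = c2.1.1.1, rstrip c1.1.1.2 = rstrip c2.1.1.2,
      c1.1.2 = c2.1.2 & rstrip c1.2 = rstrip c2.2].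

Lemma ceq_refl c : ceq c c. Proof. by []. Qed.

Lemma ceq_sym c1 c2 : ceq c1 c2 -> ceq c2 c1.
Proof. by case=> *; split. Qed.

Lemma nstep_ceq h dn c1 c2 : ceq c1 c2 -> ceq (nstep h dn c1) (nstep h dn c2).
Proof.
case: c1 => [[[q l] a] r]; case: c2 => [[[q2 l2] a2] r2] [/= <- el <- er].
rewrite /nstep; case: eqP => // _.
case: (dn q a) => [[q' b] mv]; case: mv; split=> //=.
- by rewrite el.
- by rewrite -head_rstrip er head_rstrip.
- by rewrite -!behead_rstrip er.
- by rewrite -!behead_rstrip el.
- by rewrite -head_rstrip el head_rstrip.
- by rewrite er.
Qed.

Lemma iter_ceq h dn c1 c2 k : ceq c1 c2 -> ceq (iter k (nstep h dn) c1) (iter k (nstep h dn) c2).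
Proof. by move=> e; elim: k => //= k IH; apply: nstep_ceq. Qed.

Definition outp (s : seq nat) := take (find (fun x => x == 0) s) s.

Lemma outp_rstrip s : outp (rstrip s) = outp s.
Proof.
elim: s => //= x s IH.
case: ifP => [/andP[/eqP -> _]|_] //.
rewrite /outp /=; case: eqP => // _; congr (_ :: _); exact: IH.
Qed.

Lemma outp_ceq a r r2 : rstrip r = rstrip r2 -> outp (a :: r) = outp (a :: r2).
Proof. by move=> e; rewrite -outp_rstrip /= e -[in RHS]outp_rstrip /= . Qed.

Lemma iter_halt h dn c k : c.1.1.1 = h -> iter k (nstep h dn) c = c.
Proof.
move=> hc; elim: k => //= k ->.
by case: c hc => [[[q l] a] r] /= ->; rewrite /nstep eqxx.
Qed.

Lemma iter_add f (x : ncfg) m n : iter (m + n) f x = iter n f (iter m f x).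
Proof. by rewrite addnC iterD. Qed.

Lemma iter1 (f : ncfg -> ncfg) x : iter 1 f x = f x. Proof. by []. Qed.

Section Steps.
Variables (h : nat) (dn : ndelta).
Local Notation st := (nstep h dn).

Lemma T_nil q l : T q l [::] = T q l [:: 0].
Proof. by []. Qed.

Lemma step_R q l a r q' b : q != h -> dn q a = (q', b, true) ->
  st (T q l (a :: r)) = T q' (b :: l) r.
Proof. by move=> /negbTE hq e; rewrite /nstep /= hq e. Qed.

Lemma step_L q l a r q' b : q != h -> dn q a = (q', b, false) ->
  st (T q l (a :: r)) = T q' (behead l) (head 0 l :: b :: r).
Proof. by move=> /negbTE hq e; rewrite /nstep /= hq e. Qed.

Lemma walkR q s l r : q != h -> (forall x, x \in s -> dn q x = (q, x, true)) ->
  iter (size s) st (T q l (s ++ r)) = T q (rev s ++ l) r.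
Proof.
move=> hq; elim: s l => [|x s IH] l hs; first by [].
rewrite cat_cons [size _]/= iterSr (@step_R _ _ _ _ q x) //; last by apply: hs; rewrite inE eqxx.
rewrite IH; last by move=> y ys; apply: hs; rewrite inE ys orbT.
by rewrite rev_cons cat_rcons.
Qed.

Lemma walkL q s l c r : q != h -> (forall x, x \in c :: s -> dn q x = (q, x, false)) ->
  iter (size s).+1 st (T q (s ++ l) (c :: r)) = T q (behead l) (head 0 l :: rev s ++ c :: r).
Proof.
move=> hq; elim: s c r => [|x s IH] c r hs.
  change (st (T q l (c :: r)) = T q (behead l) (head 0 l :: c :: r)).
  by rewrite (@step_L _ _ _ _ q c) //; apply: hs; rewrite inE eqxx.
rewrite cat_cons [size _]/= iterSr (@step_L _ _ _ _ q c) //; last by apply: hs; rewrite inE eqxx.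
rewrite [behead _]/= [head _ _]/=.
rewrite IH; last by move=> y; rewrite inE => /orP[/eqP->|ys]; apply: hs; rewrite !inE ?eqxx ?orbT // ys !orbT.
by rewrite rev_cons cat_rcons.
Qed.

Lemma walkRm q g s l r : q != h -> (forall x, x \in s -> dn q x = (q, g x, true)) ->
  iter (size s) st (T q l (s ++ r)) = T q (rev (map g s) ++ l) r.
Proof.
move=> hq; elim: s l => [|x s IH] l hs; first by [].
rewrite cat_cons [size _]/= iterSr (@step_R _ _ _ _ q (g x)) //; last by apply: hs; rewrite inE eqxx.
rewrite IH; last by move=> y ys; apply: hs; rewrite inE ys orbT.
by rewrite map_cons rev_cons cat_rcons.
Qed.

Lemma walkLm q0 a0 b0 q g s l r : q0 != h -> q != h -> dn q0 a0 = (q, b0, false) ->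
  (forall x, x \in s -> dn q x = (q, g x, false)) ->
  iter (size s).+1 st (T q0 (s ++ l) (a0 :: r)) =
  T q (behead l) (head 0 l :: rev (map g s) ++ b0 :: r).
Proof.
move=> hq0 hq e0; elim: s q0 a0 b0 r hq0 e0 => [|x s IH] q0 a0 b0 r hq0 e0 hs.
  change (st (T q0 l (a0 :: r)) = T q (behead l) (head 0 l :: b0 :: r)).
  by rewrite (@step_L _ _ _ _ q b0).
rewrite cat_cons [size _]/= iterSr (@step_L _ _ _ _ q b0) // [behead _]/= [head _ _]/=.
rewrite (IH q x (g x)) //; first by rewrite map_cons rev_cons cat_rcons.
- by apply: hs; rewrite inE eqxx.
- by move=> y ys; apply: hs; rewrite inE ys orbT.
Qed.

Definition reach (c1 c2 : ncfg) (n : nat) := exists2 k, k <= n & iter k st c1 = c2.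

Lemma reach_refl c : reach c c 0. Proof. by exists 0. Qed.

Lemma reach_trans c1 c2 c3 n1 n2 : reach c1 c2 n1 -> reach c2 c3 n2 -> reach c1 c3 (n1 + n2).
Proof.
case=> k1 h1 e1 [k2 h2 e2]; exists (k1 + k2); first exact: leq_add.
by rewrite iter_add e1 e2.
Qed.

Lemma reach_mono c1 c2 n n' : n <= n' -> reach c1 c2 n -> reach c1 c2 n'.
Proof. by move=> le [k hk e]; exists k => //; apply: leq_trans le. Qed.

Lemma reach_iter c k : reach c (iter k st c) k.
Proof. by exists k. Qed.

Lemma reach_step c : reach c (st c) 1.
Proof. by exists 1. Qed.

End Steps.

Lemma val_code M c : c < (tm_nsym M).+4 -> val (code M c) = c.
Proof. by move=> hc; apply: inordK. Qed.

Lemma map_val_code M w : all (fun x => x < (tm_nsym M).+4) w ->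
  map val (map (code M) w) = w.
Proof.
elim: w => //= x w IH /andP[hx hw]; by rewrite val_code // IH.
Qed.

Lemma projc_init M w : all (fun x => x < (tm_nsym M).+4) w ->
  projc (tm_init M w) = T 0 [::] w.
Proof.
rewrite /tm_init /T; case: w => [|x w] /=; first by rewrite val_blank.
by move=> /andP[hx hw]; rewrite val_code // map_val_code.
Qed.

Lemma runs_iff M w t v : all (fun x => x < (tm_nsym M).+4) v ->
  tm_runs M w t v <->
  (let c := projc (iter t (@tm_step M) (tm_init M w)) in
   c.1.1.1 = tm_nstate M /\ outp (c.1.2 :: c.2) = v).
Proof.
move=> hv; rewrite /tm_runs.
case: (iter t _ _) => [[[q l] a] r] /=.
have -> : (q = ord_max) <-> (val q = tm_nstate M).
  by split=> [->|e] //; apply: val_inj.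
have -> : (tm_output (q, l, a, r) = map (code M) v) <-> (outp (val a :: map val r) = v).
  rewrite /tm_output /outp -map_cons -map_take find_map.
  have -> : find (preim val (fun x => x == 0)) (a :: r) = find (fun x => x == blank M) (a :: r).
    by apply: eq_find => x /=; rewrite -(val_blank M).
  split=> [->|e]; first by rewrite map_val_code.
  by apply: (inj_map val_inj); rewrite map_val_code.
by [].
Qed.

Definition shiftc off (c : ncfg) : ncfg := (c.1.1.1 + off, c.1.1.2, c.1.2, c.2).

Definition cdn (off : nat) (prep : ndelta) (M : TM) : ndelta := fun q a =>
  if q < off then prep q a else
  let: (q', b, mv) := tdn M (q - off) a in (q' + off, b, mv).

Lemma cdn_shift off prep M (c : ncfg) :
  nstep (tm_nstate M + off) (cdn off prep M) (shiftc off c) =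
  shiftc off (nstep (tm_nstate M) (tdn M) c).
Proof.
case: c => [[[q l] a] r]; rewrite /nstep /shiftc /= eqn_add2r.
case: eqP => // _.
rewrite /cdn ltnNge leq_addl /= addnK.
by case: (tdn M q a) => [[q' b] []].
Qed.

Lemma cdn_iter off prep M (c : ncfg) k :
  iter k (nstep (tm_nstate M + off) (cdn off prep M)) (shiftc off c) =
  shiftc off (iter k (nstep (tm_nstate M) (tdn M)) c).
Proof. by elim: k => //= k ->; rewrite cdn_shift. Qed.

Lemma combine_runs ns off prep M w w' v c1 B1 tM t :
  let M' := mkTM ns (tm_nstate M + off) (cdn off prep M) in
  dn_ok ns (tm_nstate M + off) (cdn off prep M) ->
  all (fun x => x < (tm_nsym M).+4) w ->
  all (fun x => x < ns.+4) w' ->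
  all (fun x => x < (tm_nsym M).+4) v ->
  all (fun x => x < ns.+4) v ->
  reach (tm_nstate M + off) (cdn off prep M) (T 0 [::] w') c1 B1 ->
  ceq c1 (shiftc off (T 0 [::] w)) ->
  tm_runs M w tM v ->
  B1 + tM <= t ->
  tm_runs M' w' t v.
Proof.
move=> M' ok hw hw' hv hv' [k1 hk1 e1] hc1 /runs_iff -/(_ hv) [hs ho] ht.
apply/(runs_iff (M := M')) => //=.
rewrite mkTM_iter // (projc_init (M := M')) //.
have -> : t = k1 + tM + (t - (k1 + tM)) by rewrite subnKC // (leq_trans _ ht) // leq_add2r.
rewrite !iter_add e1.
set c2 := iter tM _ c1.
have hc2 : ceq c2 (shiftc off (projc (iter tM (@tm_step M) (tm_init M w)))).
  by rewrite proj_iter (projc_init hw) -(cdn_iter off prep); apply: iter_ceq.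
case: hc2 => e_s _ e_a e_r.
rewrite iter_halt; last by rewrite e_s /shiftc /= hs.
split; first by rewrite e_s /shiftc /= hs.
by rewrite e_a (outp_ceq _ e_r).
Qed.

Lemma rstrip_zeros s k : rstrip (s ++ nseq k 0) = rstrip s.
Proof.
elim: s => [|x s IH] /=; last by rewrite IH.
by elim: k => //= k ->.
Qed.

Lemma T_zeros q l s k : ceq (T q l (s ++ nseq k 0)) (T q l s).
Proof.
case: s => [|x s]; split=> //=; last by rewrite rstrip_zeros.
- by case: k.
- by case: k => //= k; rewrite -(cat0s (nseq k 0)) rstrip_zeros.
Qed.

Lemma ceq_trans c1 c2 c3 : ceq c1 c2 -> ceq c2 c3 -> ceq c1 c3.
Proof. by case=> e1 e2 e3 e4 [f1 f2 f3 f4]; split; congruence. Qed.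

Definition Wenc (s : seq nat) : seq nat := flatten [seq enc_bin m ++ [:: 3] | m <- s].

Lemma enc_bin_not3 m x : x \in enc_bin m -> x != 3.
Proof. by rewrite /enc_bin => /mapP[b _ ->]; case: b. Qed.

Lemma enc_bin_small m x : x \in enc_bin m -> (0 < x) && (x <= 2).
Proof. by rewrite /enc_bin => /mapP[b _ ->]; case: b. Qed.

Definition skipdn (q a : nat) : nat * nat * bool :=
  if a == 3 then (q.+1, a, true) else (q, a, true).

Lemma skip_phase h dn d j s L rest :
  d < h -> (forall q a, q < d -> dn q a = skipdn q a) -> j + size s <= d ->
  iter (size (Wenc s)) (nstep h dn) (T j L (Wenc s ++ rest)) =
  T (j + size s) (rev (Wenc s) ++ L) rest.
Proof.
move=> hd hdn; elim: s j L => [|m s IH] j L hjs; first by rewrite addn0.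
have hj : j < d by move: hjs; rewrite /= addnS => /(leq_trans _); apply; rewrite ltnS leq_addr.
have hjh : j != h by rewrite neq_ltn (ltn_trans hj hd).
rewrite /Wenc /= -/(Wenc s) !size_cat !iter_add -!catA.
rewrite (walkRm (g := id)) //; last first.
  by move=> x hx; rewrite hdn // /skipdn (negbTE (enc_bin_not3 hx)).
rewrite map_id [size [:: 3]]/= iter1 (@step_R _ _ _ _ _ _ j.+1 3) //; last by rewrite hdn.
rewrite -addSnnS IH; last by rewrite addSnnS.
by rewrite rev_cat /= rev_cons cat_rcons -!catA.
Qed.

Lemma ceq_start off w k : ceq (T off [:: 0] (w ++ nseq k 0)) (shiftc off (T 0 [::] w)).
Proof.
apply: ceq_trans (T_zeros _ _ _ _) _.
by case: w => [|x w]; split.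
Qed.

End Frame.
Import Frame.

Module Util.
Import Order.TTheory GRing.Theory Num.Theory.

Section Sup.
Variable R : realDomainType.
Local Open Scope ring_scope.

Lemma supnorm_ge0 k (v : 'I_k -> R) : 0 <= supnorm v.
Proof. rewrite /supnorm; elim/big_ind: _ => // x y hx hy; by rewrite le_max hx. Qed.

Lemma supnorm_leP k (v : 'I_k -> R) e : 0 <= e -> (forall i, `|v i| <= e) -> supnorm v <= e.
Proof. move=> he hv; rewrite /supnorm; elim/big_ind: _ => // x y hx hy; by rewrite ge_max hx hy. Qed.

Lemma supnorm_ge k (v : 'I_k -> R) i : `|v i| <= supnorm v.
Proof.
rewrite /supnorm.
have : i \in index_enum 'I_k by rewrite mem_index_enum.
elim: (index_enum 'I_k) => // j r IH.
rewrite inE big_cons le_max => /orP[/eqP ->|/IH ->]; by rewrite ?lexx ?orbT.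
Qed.

Lemma supnorm_eq k (v w : 'I_k -> R) : (forall i, v i = w i) -> supnorm v = supnorm w.
Proof. by move=> e; apply: eq_bigr => i _; rewrite e. Qed.

End Sup.

Local Open Scope ring_scope.

Lemma ratr_dy (R : realType) (q : dyadic) : ratr (dy_val rat q) = dy_val R q.
Proof.
rewrite /dy_val fmorph_div rmorphM rmorphXn rmorphN rmorph1 !rmorph_nat rmorphXn rmorph_nat.
by [].
Qed.

Lemma ratr_pow2inv (R : realType) n : ratr ((2%:R ^+ n)^-1 : rat) = (2%:R ^+ n)^-1 :> R.
Proof. by rewrite fmorphV rmorphXn rmorph_nat. Qed.

Local Close Scope ring_scope.

Lemma size_Wenc (s : seq nat) : size (Wenc s) = (\sum_(m <- s) blen m + size s)%N.
Proof.
elim: s => [|m s IH]; first by rewrite big_nil.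
by rewrite /Wenc /= -/(Wenc s) big_cons size_cat IH size_cat /enc_bin size_map /blen /=; lia.
Qed.

Lemma enc_input0 d (ms : d.-tuple nat) (us : 0.-tuple nat) p :
  enc_input ms us p = Wenc ms ++ nseq p 2.
Proof. by rewrite /enc_input tuple0. Qed.

Lemma tuple1_eq (us : 1.-tuple nat) : tval us = [:: tnth us ord0].
Proof. by case: us => [[|x [|y s]]] //= _; rewrite /tnth. Qed.

Lemma enc_input1 d (ms : d.-tuple nat) (us : 1.-tuple nat) p :
  enc_input ms us p = Wenc ms ++ nseq (tnth us ord0) 2 ++ 3 :: nseq p 2.
Proof. by rewrite /enc_input tuple1_eq /= cats0 -catA. Qed.

Lemma isize0 d (ms : d.-tuple nat) (us : 0.-tuple nat) p :
  input_size ms us p = (\sum_(m <- ms) blen m + p)%N.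
Proof. by rewrite /input_size tuple0 big_nil addn0. Qed.

Lemma isize1 d (ms : d.-tuple nat) (us : 1.-tuple nat) p :
  input_size ms us p = (\sum_(m <- ms) blen m + tnth us ord0 + p)%N.
Proof. by rewrite /input_size tuple1_eq big_seq1. Qed.

Definition small (s : seq nat) := all (fun x => x <= 3) s.

Lemma small_cat s t : small (s ++ t) = small s && small t.
Proof. exact: all_cat. Qed.

Lemma small_nseq n x : x <= 3 -> small (nseq n x).
Proof. by move=> hx; elim: n => //= n ->; rewrite hx. Qed.

Lemma small_enc_bin m : small (enc_bin m).
Proof. by apply/allP => x /enc_bin_small /andP[_ /leq_trans]; apply. Qed.

Lemma small_Wenc s : small (Wenc s).
Proof. elim: s => //= m s IH; by rewrite small_cat small_cat small_enc_bin IH. Qed.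

Lemma small_dyadics k (qs : k.-tuple dyadic) : small (enc_dyadics qs).
Proof.
rewrite /enc_dyadics; elim: (tval qs) => //= q s IH.
rewrite small_cat IH andbT /enc_dyadic /= small_cat small_enc_bin /= small_cat small_enc_bin /=.
by case: q.1.1.
Qed.

Lemma small_lt s n : small s -> all (fun x => x < n.+4) s.
Proof. by move=> /allP h; apply/allP => x /h hx; rewrite ltnS (leq_trans hx). Qed.

End Util.
Import Util.

Module Fwd.
Import Order.TTheory GRing.Theory Num.Theory.

Section Fwd.
Variables (d : nat) (M : TM).

Definition fprep (q a : nat) : nat * nat * bool :=
  if q < d then skipdn q a
  else if q == d then (if a == 3 then (d.+1, 3, true) else (d, a, true))
  else if q == d.+1 then (if a == 0 then (d.+2, 0, false) else (d.+1, a, true))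
  else if q == d.+2 then (if a == 3 then (d.+3, 0, false) else (d.+2, 0, false))
  else (if a == 0 then (d.+4, 0, true) else (d.+3, a, false)).

Definition foff := d.+4.
Definition fdn := cdn foff fprep M.
Definition fh := tm_nstate M + foff.
Definition fM := mkTM (tm_nsym M) fh fdn.

Lemma fdn_ok : dn_ok (tm_nsym M) fh fdn.
Proof.
move=> q a hq ha; rewrite /fdn /cdn.
case: ltnP => hqo.
  have hfo : foff <= fh by rewrite /fh leq_addl.
  rewrite /fprep /skipdn.
  repeat (case: ifP => _ /=); split=> //; rewrite ?(leq_trans _ hfo) //; rewrite /foff; lia.
rewrite /tdn; case: (tm_delta _ _) => [[q' b] mv] /=; split.
  by rewrite /fh leq_add2r -ltnS.
exact: ltn_ord.
Qed.

Lemma fq_ne q : q < foff -> q != fh.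
Proof. by move=> hq; rewrite neq_ltn (leq_trans hq) // /fh leq_addl. Qed.

Lemma fdn_prep q a : q < foff -> fdn q a = fprep q a.
Proof. by move=> hq; rewrite /fdn /cdn hq. Qed.

Lemma fprep_d a : a != 3 -> fprep d a = (d, a, true).
Proof. by move=> /negbTE ha; rewrite /fprep ltnn eqxx ha. Qed.
Lemma fprep_d3 : fprep d 3 = (d.+1, 3, true).
Proof. by rewrite /fprep ltnn eqxx. Qed.
Lemma f_l1 : (d.+1 < d) = false. Proof. lia. Qed.
Lemma f_l2 : (d.+2 < d) = false. Proof. lia. Qed.
Lemma f_l3 : (d.+3 < d) = false. Proof. lia. Qed.
Lemma f_e10 : (d.+1 == d) = false. Proof. lia. Qed.
Lemma f_e20 : (d.+2 == d) = false. Proof. lia. Qed.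
Lemma f_e21 : (d.+2 == d.+1) = false. Proof. lia. Qed.
Lemma f_e30 : (d.+3 == d) = false. Proof. lia. Qed.
Lemma f_e31 : (d.+3 == d.+1) = false. Proof. lia. Qed.
Lemma f_e32 : (d.+3 == d.+2) = false. Proof. lia. Qed.
Ltac fps := rewrite /fprep ?f_l1 ?f_l2 ?f_l3 ?f_e10 ?f_e20 ?f_e21 ?f_e30 ?f_e31 ?f_e32 ?eqxx.

Lemma fprep_d1 a : a != 0 -> fprep d.+1 a = (d.+1, a, true).
Proof. by move=> /negbTE ha; fps; rewrite ha. Qed.
Lemma fprep_d10 : fprep d.+1 0 = (d.+2, 0, false).
Proof. by fps. Qed.
Lemma fprep_d2 a : a != 3 -> fprep d.+2 a = (d.+2, 0, false).
Proof. by move=> /negbTE ha; fps; rewrite ha. Qed.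
Lemma fprep_d23 : fprep d.+2 3 = (d.+3, 0, false).
Proof. by fps. Qed.
Lemma fprep_d3x a : a != 0 -> fprep d.+3 a = (d.+3, a, false).
Proof. by move=> /negbTE ha; fps; rewrite ha. Qed.
Lemma fprep_d30 : fprep d.+3 0 = (d.+4, 0, true).
Proof. by fps. Qed.

Lemma fprep_phase (ms : seq nat) u p : size ms = d ->
  reach fh fdn (T 0 [::] (Wenc ms ++ nseq u 2 ++ 3 :: nseq p 2))
     (T foff [:: 0] ((Wenc ms ++ nseq u 2) ++ nseq p.+2 0))
     (2 * (size (Wenc ms) + u + p) + 4).
Proof.
move=> hms.
set W := Wenc ms.
have nW x : x \in W -> x != 0.
  rewrite /W /Wenc => /flattenP[s /mapP[m _ ->]]; rewrite mem_cat => /orP[/enc_bin_small|].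
    by case: x.
  by rewrite inE => /eqP ->.
have r1 : reach fh fdn (T 0 [::] (W ++ nseq u 2 ++ 3 :: nseq p 2))
                  (T d (rev W ++ [::]) (nseq u 2 ++ 3 :: nseq p 2)) (size W).
  have := @skip_phase fh fdn d 0 ms [::] (nseq u 2 ++ 3 :: nseq p 2).
  rewrite add0n hms => <-; first exact: reach_iter.
  - by rewrite /fh /foff; lia.
  - by move=> q a hq; rewrite fdn_prep /fprep ?hq //; rewrite /foff; lia.
  - by rewrite ?hms.
have r2 : reach fh fdn (T d (rev W ++ [::]) (nseq u 2 ++ 3 :: nseq p 2))
                  (T d (nseq u 2 ++ rev W) (3 :: nseq p 2)) u.
  have := walkRm (h := fh) (dn := fdn) (q := d) (g := id) (s := nseq u 2) (rev W ++ [::]) (3 :: nseq p 2).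
  rewrite map_id rev_nseq cats0 size_nseq => <-; first exact: reach_iter.
  - by apply: fq_ne; rewrite /foff; lia.
  - by move=> x /nseqP[-> _]; rewrite fdn_prep ?fprep_d // /foff; lia.
have r3 : reach fh fdn (T d (nseq u 2 ++ rev W) (3 :: nseq p 2))
                  (T d.+1 (3 :: nseq u 2 ++ rev W) (nseq p 2 ++ [::])) 1.
  rewrite cats0 -(@step_R fh fdn d _ 3 _ d.+1 3); first exact: reach_step.
  - by apply: fq_ne; rewrite /foff; lia.
  - by rewrite fdn_prep ?fprep_d3 // /foff; lia.
set X := nseq u 2 ++ rev W.
have nX x : x \in X -> x != 0 by rewrite mem_cat mem_rev => /orP[/nseqP[->]|/nW].
have r4 : reach fh fdn (T d.+1 (3 :: X) (nseq p 2 ++ [::]))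
                  (T d.+1 (nseq p 2 ++ 3 :: X) [::]) p.
  have := walkRm (h := fh) (dn := fdn) (q := d.+1) (g := id) (s := nseq p 2) (3 :: X) [::].
  rewrite map_id rev_nseq size_nseq => <-; first exact: reach_iter.
  - by apply: fq_ne; rewrite /foff; lia.
  - by move=> x /nseqP[-> _]; rewrite fdn_prep ?fprep_d1 // /foff; lia.
rewrite T_nil in r4.
have r5 : reach fh fdn (T d.+1 (nseq p 2 ++ 3 :: X) [:: 0])
                  (T d.+2 X (3 :: nseq p 0 ++ [:: 0])) p.+1.
  have := walkLm (h := fh) (dn := fdn) (q0 := d.+1) (a0 := 0) (b0 := 0) (q := d.+2)
            (g := fun _ => 0) (s := nseq p 2) (3 :: X) [::].
  rewrite map_nseq rev_nseq size_nseq /= => <-; first exact: reach_iter.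
  - by apply: fq_ne; rewrite /foff; lia.
  - by apply: fq_ne; rewrite /foff; lia.
  - by rewrite fdn_prep ?fprep_d10 // /foff; lia.
  - by move=> x /nseqP[-> _]; rewrite fdn_prep ?fprep_d2 // /foff; lia.
have r6 : reach fh fdn (T d.+2 X (3 :: nseq p 0 ++ [:: 0]))
                  (T d.+3 [::] (0 :: rev X ++ 0 :: nseq p 0 ++ [:: 0])) (size X).+1.
  have := walkLm (h := fh) (dn := fdn) (q0 := d.+2) (a0 := 3) (b0 := 0) (q := d.+3)
            (g := id) (s := X) [::] (nseq p 0 ++ [:: 0]).
  rewrite map_id cats0 => <-; first exact: reach_iter.
  - by apply: fq_ne; rewrite /foff; lia.
  - by apply: fq_ne; rewrite /foff; lia.
  - by rewrite fdn_prep ?fprep_d23 // /foff; lia.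
  - by move=> x /nX hx; rewrite fdn_prep ?fprep_d3x // /foff; lia.
have r7 : reach fh fdn (T d.+3 [::] (0 :: rev X ++ 0 :: nseq p 0 ++ [:: 0]))
                  (T foff [:: 0] (rev X ++ 0 :: nseq p 0 ++ [:: 0])) 1.
  rewrite -(@step_R fh fdn d.+3 _ 0 _ d.+4 0); first exact: reach_step.
  - by apply: fq_ne; rewrite /foff; lia.
  - by rewrite fdn_prep ?fprep_d30 // /foff; lia.
have e : rev X ++ 0 :: nseq p 0 ++ [:: 0] = (W ++ nseq u 2) ++ nseq p.+2 0.
  rewrite /X rev_cat revK rev_nseq; congr (_ ++ _) => /=.
  by congr (_ :: _); elim: (p) => //= p' ->.
rewrite -e.
apply: reach_mono (reach_trans r1 (reach_trans r2 (reach_trans r3 (reach_trans r4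
         (reach_trans r5 (reach_trans r6 r7)))))).
rewrite /X size_cat size_rev size_nseq; lia.
Qed.

End Fwd.

End Fwd.
Import Fwd.

Module Fwd2.
Import Order.TTheory GRing.Theory Num.Theory.

Lemma time_bound_f c d B u p :
  (2 * (B + d + u + p) + 4 + c * (B + u).+1 ^ c <=
   (c + 2 * d + 4) * (B + u + p).+1 ^ (c + 2 * d + 4))%N.
Proof.
set X := (B + u + p).+1.
have hX : (0 < X)%N by [].
have h1 : ((B + u).+1 ^ c <= X ^ (c + 2 * d + 4))%N.
  apply: (@leq_trans (X ^ c)).
    have hb : ((B + u).+1 <= X)%N by rewrite /X; lia.
    by elim: (c) => // c' IH; rewrite !expnS; apply: leq_mul.
  by apply: leq_pexp2l => //; lia.
have h2 : (X <= X ^ (c + 2 * d + 4))%N.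
  by rewrite -{1}(expn1 X); apply: leq_pexp2l => //; lia.
rewrite mulnDl.
have : (c * (B + u).+1 ^ c <= c * X ^ (c + 2 * d + 4))%N by apply: leq_mul.
have : ((2 * d + 4) * X <= (2 * d + 4) * X ^ (c + 2 * d + 4))%N by apply: leq_mul.
rewrite /X; nia.
Qed.

Local Open Scope ring_scope.

Lemma pow2inv_gt0 (R : numFieldType) n : 0 < (2%:R ^+ n : R)^-1.
Proof. by rewrite invr_gt0 exprn_gt0 // ltr0n. Qed.

Lemma pow2inv_le (R : numFieldType) m n : (m <= n)%N -> (2%:R ^+ n : R)^-1 <= (2%:R ^+ m)^-1.
Proof.
move=> hmn; rewrite lef_pV2 ?posrE ?exprn_gt0 ?ltr0n //.
by rewrite ler_eXn2l // ltr1n.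
Qed.

Lemma forward (R : realType) (d d' : nat) (F : d.-tuple nat -> 'I_d' -> R) :
  ptime_computable F ->
  exists (f : d.-tuple nat -> nat -> 'I_d' -> rat)
         (g : d.-tuple nat -> nat -> rat),
    ptime_computable_unary R f /\
    (forall m n, supnorm (fun i => ratr (f m n i) - F m i) <= ratr (g m n)) /\
    (forall m n, 0 <= g m n) /\
    (forall m, tends_to_zero (g m)) /\
    (exists p : nat -> nat, is_nat_poly p /\ uniform_modulus g p).
Proof.
case=> M [c H].
pose u0 : 0.-tuple nat := [tuple].
pose P (ms : d.-tuple nat) (n : nat) (tq : nat * d'.-tuple dyadic) :=
  [/\ (tq.1 <= c * (input_size ms u0 n).+1 ^ c)%N,
      tm_runs M (enc_input ms u0 n) tq.1 (enc_dyadics tq.2) &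
      supnorm (fun i => dy_val R (tnth tq.2 i) - F ms i) <= (2%:R ^+ n)^-1].
have ex : forall ms n, exists tq, P ms n tq.
  by move=> ms n; have [t [qs [h1 [h2 h3]]]] := H ms u0 n; exists (t, qs); split.
pose tq ms n := proj1_sig (constructive_indefinite_description _ (ex ms n)).
have tqP : forall ms n, P ms n (tq ms n).
  by move=> ms n; rewrite /tq; case: (constructive_indefinite_description _ _).
pose f ms n i := dy_val rat (tnth (tq ms n).2 i).
pose g (ms : d.-tuple nat) n := (2%:R ^+ n : rat)^-1.
exists f, g; split; last split; last split; last split.
-
  exists (fM d M), (c + 2 * d + 4)%N => ms us p.
  set u := tnth us ord0.
  have [ht hrun hsup] := tqP ms u.
  exists ((c + 2 * d + 4) * (input_size ms us p).+1 ^ (c + 2 * d + 4))%N, (tq ms u).2.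
  split=> //; split.
  + rewrite enc_input1 -/u.
    rewrite enc_input0 in hrun.
    have hp := @fprep_phase d M ms u p (size_tuple ms).
    apply: (@combine_runs (tm_nsym M) (foff d) (fprep d) M (Wenc ms ++ nseq u 2%N)
              _ _ _ _ (tq ms u).1 _ _ _ _ _ _ hp _ hrun).
    * exact: fdn_ok.
    * by apply: small_lt; rewrite small_cat small_Wenc small_nseq.
    * apply: small_lt; rewrite !small_cat small_Wenc small_nseq //=; exact: small_nseq.
    * by apply: small_lt; exact: small_dyadics.
    * by apply: small_lt; exact: small_dyadics.
    * exact: ceq_start.
    * rewrite isize0 in ht; rewrite isize1 -/u size_Wenc size_tuple.
      apply: leq_trans (time_bound_f c d (\sum_(m <- ms) blen m) u p).
      by rewrite leq_add2l.
  + apply: (@supnorm_leP R); first exact: ltW (pow2inv_gt0 _ _).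
    by move=> i; rewrite /f ratr_dy subrr normr0; exact: ltW (pow2inv_gt0 _ _).
- move=> ms n; rewrite /g ratr_pow2inv.
  have [_ _ hsup] := tqP ms n.
  by rewrite (supnorm_eq (w := fun i => dy_val R (tnth (tq ms n).2 i) - F ms i)) // => i; rewrite /f ratr_dy.
- by move=> ms n; exact: ltW (pow2inv_gt0 _ _).
- move=> ms eps heps; exists (Num.bound (eps^-1)) => n hn.
  rewrite /g ger0_norm; last exact: ltW (pow2inv_gt0 _ _).
  rewrite -[leRHS]invrK lef_pV2 ?posrE ?invr_gt0 ?exprn_gt0 ?ltr0n //.
  by apply: ltW; apply: upper_nthrootP.
- exists id; split.
  + by exists [:: 0%N; 1%N] => n; rewrite big_ord_recr big_ord_recr big_ord0 /=; lia.
  + move=> ms n i hi; rewrite /g ger0_norm; last exact: ltW (pow2inv_gt0 _ _).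
    by apply: pow2inv_le; apply: ltnW.
Qed.

End Fwd2.
Import Fwd2.

Module Bwd.
Import Order.TTheory GRing.Theory Num.Theory.

Section Bwd.
Variables (d K : nat) (N : TM).

Definition rb := d + 7.
Definition st r j := rb + r * 8 + j.
Definition fb := rb + K.+1 * 8.
Definition boff := fb + 4.

Definition phase (k a : nat) : nat * nat * bool :=
  match k with
  | 0 => (d + 1, a, false)
  | 1 => (d + 2, a, true)
  | 2 => if a == 2 then (d + 2, 5, true) else (d + 3, 5, true)
  | 3 => (d + 4, 5, true)
  | 4 => (d + 5, 4, true)
  | 5 => (d + 6, 7, true)
  | _ => (st 0 0, 11, false)
  end.

Definition round (r j a : nat) : nat * nat * bool :=
  match j with
  | 0 => if a == 7 then (st r 1, 10, false)
         else if a == 11 then (st r 6, 10, true) else (st r 0, a, true)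
  | 1 => if (a == 3) || (a == 0) then (st r 2, a, true) else (st r 1, a, false)
  | 2 => if a == 5 then (st r 3, 6, true) else (st r 5, a, false)
  | 3 => if a == 0 then (st r 4, 9, false) else (st r 3, a, true)
  | 4 => if a == 6 then (st r 2, a, true) else (st r 4, a, false)
  | 5 => if a == 6 then (st r 5, 5, false)
         else (if r < K then st r 0 else fb, a, true)
  | 6 => if a == 9 then (st r 6, 7, true) else (st r 7, 11, false)
  | _ => if a == 7 then (st r 7, a, false)
         else if r.+1 < K then (st r.+1 0, a, true) else (st K 1, a, false)
  end.

Definition fin (k a : nat) : nat * nat * bool :=
  match k with
  | 0 => if a == 0 then (fb + 1, 0, false) else (fb, a, true)
  | 1 => if a == 9 then (fb + 1, 2, false) else (fb + 2, 3, false)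
  | 2 => if a == 3 then (fb + 3, 3, false)
         else if a == 0 then (boff, 0, true) else (fb + 2, 2, false)
  | _ => if a == 0 then (boff, 0, true) else (fb + 3, a, false)
  end.

Definition bprep (q a : nat) : nat * nat * bool :=
  if q < d then skipdn q a
  else if q < rb then phase (q - d) a
  else if q < fb then round ((q - rb) %/ 8) ((q - rb) %% 8) a
  else fin (q - fb) a.

Definition bdn := cdn boff bprep N.
Definition bh := tm_nstate N + boff.
Definition bns := (tm_nsym N + 8)%N.
Definition bM := mkTM bns bh bdn.

Lemma bq_ne q : q < boff -> q != bh.
Proof. by move=> hq; rewrite neq_ltn (leq_trans hq) // /bh leq_addl. Qed.

Lemma bdn_prep q a : q < boff -> bdn q a = bprep q a.
Proof. by move=> hq; rewrite /bdn /cdn hq. Qed.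

Lemma bprep_phase k a : k < 7 -> bprep (d + k) a = phase k a.
Proof.
move=> hk; rewrite /bprep ifF; last lia.
by rewrite ifT ?addKn //; rewrite /rb; lia.
Qed.

Lemma bprep_round r j a : r <= K -> j < 8 -> bprep (st r j) a = round r j a.
Proof.
move=> hr hj; rewrite /bprep /st ifF; last (rewrite /rb; lia).
rewrite ifF; last (rewrite /rb; lia).
rewrite ifT; last (rewrite /fb; lia).
have -> : rb + r * 8 + j - rb = r * 8 + j by lia.
by rewrite divnMDl // modnMDl divn_small // modn_small // addn0.
Qed.

Lemma bprep_fin k a : k < 4 -> bprep (fb + k) a = fin k a.
Proof.
move=> hk; rewrite /bprep ifF; last (rewrite /fb /rb; lia).
rewrite ifF; last (rewrite /fb /rb; lia).
by rewrite ifF ?addKn //; lia.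
Qed.

Lemma bdn_ok : dn_ok bns bh bdn.
Proof.
move=> q a hq ha; rewrite /bdn /cdn.
case: ltnP => hqo; last first.
  rewrite /tdn; case: (tm_delta _ _) => [[q' b] mv] /=; split.
    by rewrite /bh leq_add2r -ltnS.
  by apply: leq_trans (ltn_ord b) _; rewrite /bns; lia.
have hfo : boff <= bh by rewrite /bh leq_addl.
have hns : 11 < bns.+4 by rewrite /bns; lia.
suff : (bprep q a).1.1 <= boff /\ ((bprep q a).1.2 == a) || ((bprep q a).1.2 <= 11).
  case=> h1 /orP[/eqP ->|h2]; split => //; [exact: leq_trans hfo | exact: leq_trans hfo | exact: leq_trans h2 _].
rewrite /bprep.
case: ltnP => h0.
  by rewrite /skipdn; case: ifP => _ /=; rewrite eqxx orTb; split=> //; rewrite /boff /fb /rb; lia.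
case: ltnP => h1.
  have : q - d < 7 by move: h1; rewrite /rb; lia.
  case: (q - d) => [|[|[|[|[|[|[|k]]]]]]] //= _; rewrite ?eqxx; try (by split=> //; rewrite /st /boff /fb /rb; lia).
  by case: ifP => _ /=; split=> //; rewrite /st /boff /fb /rb; lia.
case: ltnP => h2; last first.
  have : q - fb < 4 by move: hqo; rewrite /boff; lia.
  case: (q - fb) => [|[|[|[|k]]]] //= _; repeat (case: ifP => _ /=); split=> //; rewrite /boff; lia.
have hr : (q - rb) %/ 8 <= K by rewrite -ltnS ltn_divLR //; move: h2; rewrite /fb; lia.
move: ((q - rb) %/ 8) hr ((q - rb) %% 8) => r hr j.
case: j => [|[|[|[|[|[|[|j]]]]]]] /=; repeat (case: ifP => _ /=);
  rewrite ?eqxx ?orTb; split=> //; rewrite /st /boff /fb /rb; lia.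
Qed.

End Bwd.

End Bwd.
Import Bwd.

Module Bwd2.
Import Order.TTheory GRing.Theory Num.Theory.

Lemma nseq_rcons n (x : nat) : nseq n x ++ [:: x] = nseq n.+1 x.
Proof. by elim: n => //= n ->. Qed.

Lemma nseq_add n m (x : nat) : nseq (n + m) x = nseq n x ++ nseq m x.
Proof. by elim: n => //= n ->. Qed.

Section Bwd2.
Variables (d K : nat) (N : TM).

Local Notation st := (st d).
Local Notation bh := (bh d K N).
Local Notation bdn := (bdn d K N).
Local Notation round := (round d K).
Local Notation reach := (reach bh bdn).

Lemma st_lt r j : r <= K -> j < 8 -> st r j < boff d K.
Proof. by move=> hr hj; rewrite /Bwd.st /boff /fb /rb; lia. Qed.

Lemma stne r j : r <= K -> j < 8 -> st r j != bh.
Proof. by move=> hr hj; apply: bq_ne; apply: st_lt. Qed.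

Lemma bdnR r j x : r <= K -> j < 8 -> bdn (st r j) x = round r j x.
Proof. by move=> hr hj; rewrite bdn_prep ?st_lt // bprep_round. Qed.

Variables (b : nat) (x0 : nat) (L0 : seq nat).
Hypothesis hx0 : (x0 == 3) || (x0 == 0).
Local Notation Lx := (x0 :: L0).

Lemma x0ne6 : x0 != 6. Proof. by case/orP: hx0 => /eqP ->. Qed.

Definition Can r g a c :=
  T (st r 0) (nseq g 10 ++ 4 :: nseq b 5 ++ Lx) (nseq a 7 ++ 11 :: nseq c 9).

Section R.
Variables (r : nat) (hr : r <= K).

Lemma R0x x : x != 7 -> x != 11 -> bdn (st r 0) x = (st r 0, x, true).
Proof. by move=> /negbTE h1 /negbTE h2; rewrite bdnR //= h1 h2. Qed.
Lemma R07 : bdn (st r 0) 7 = (st r 1, 10, false).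
Proof. by rewrite bdnR. Qed.
Lemma R011 : bdn (st r 0) 11 = (st r 6, 10, true).
Proof. by rewrite bdnR. Qed.
Lemma GOBx x : x != 3 -> x != 0 -> bdn (st r 1) x = (st r 1, x, false).
Proof. by move=> /negbTE h1 /negbTE h2; rewrite bdnR //= h1 h2. Qed.
Lemma GOBb x : (x == 3) || (x == 0) -> bdn (st r 1) x = (st r 2, x, true).
Proof. by move=> h; rewrite bdnR //= h. Qed.
Lemma CP05 : bdn (st r 2) 5 = (st r 3, 6, true).
Proof. by rewrite bdnR. Qed.
Lemma CP04 : bdn (st r 2) 4 = (st r 5, 4, false).
Proof. by rewrite bdnR. Qed.
Lemma CP1x x : x != 0 -> bdn (st r 3) x = (st r 3, x, true).
Proof. by move=> /negbTE h1; rewrite bdnR //= h1. Qed.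
Lemma CP10 : bdn (st r 3) 0 = (st r 4, 9, false).
Proof. by rewrite bdnR. Qed.
Lemma CP2x x : x != 6 -> bdn (st r 4) x = (st r 4, x, false).
Proof. by move=> /negbTE h1; rewrite bdnR //= h1. Qed.
Lemma CP26 : bdn (st r 4) 6 = (st r 2, 6, true).
Proof. by rewrite bdnR. Qed.
Lemma RST6 : bdn (st r 5) 6 = (st r 5, 5, false).
Proof. by rewrite bdnR. Qed.
Lemma RSTx x : x != 6 -> bdn (st r 5) x = (if r < K then st r 0 else fb d K, x, true).
Proof. by move=> /negbTE h1; rewrite bdnR //= h1. Qed.
Lemma RE19 : bdn (st r 6) 9 = (st r 6, 7, true).
Proof. by rewrite bdnR. Qed.
Lemma RE10 : bdn (st r 6) 0 = (st r 7, 11, false).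
Proof. by rewrite bdnR. Qed.
Lemma RE27 : bdn (st r 7) 7 = (st r 7, 7, false).
Proof. by rewrite bdnR. Qed.
Lemma RE210 : bdn (st r 7) 10 =
  if r.+1 < K then (st r.+1 0, 10, true) else (st K 1, 10, false).
Proof. by rewrite bdnR //=; case: ifP. Qed.

Lemma sne j : j < 8 -> st r j != bh.
Proof. exact: stne. Qed.

(* one copy of a B cell to the end of the tape *)
Lemma copy_step L Mid i k c :
  (forall x, x \in Mid -> (x != 0) && (x != 6)) ->
  reach (T (st r 2) (nseq i 6 ++ L) (nseq k.+1 5 ++ 4 :: Mid ++ nseq c 9))
        (T (st r 2) (nseq i.+1 6 ++ L) (nseq k 5 ++ 4 :: Mid ++ nseq c.+1 9))
        (2 * (k + 1 + size Mid + c) + 3).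
Proof.
move=> hM.
set Y := nseq k 5 ++ 4 :: Mid ++ nseq c 9.
have hY x : x \in Y -> (x != 0) && (x != 6).
  rewrite /Y mem_cat inE mem_cat => /or3P[/nseqP[-> _]|/eqP ->|/orP[/hM //|/nseqP[-> _]]] //.
have r1 : reach (T (st r 2) (nseq i 6 ++ L) (nseq k.+1 5 ++ 4 :: Mid ++ nseq c 9))
                (T (st r 3) (nseq i.+1 6 ++ L) (Y ++ [::])) 1.
  rewrite cats0 -(@step_R bh bdn (st r 2) _ 5 _ (st r 3) 6); first exact: reach_step.
  - exact: sne.
  - exact: CP05.
have r2 : reach (T (st r 3) (nseq i.+1 6 ++ L) (Y ++ [::]))
                (T (st r 3) (rev Y ++ 6 :: nseq i 6 ++ L) [:: 0]) (size Y).
  have := walkRm (h := bh) (dn := bdn) (q := st r 3) (g := id) (s := Y) (nseq i.+1 6 ++ L) [::].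
  rewrite map_id T_nil => <-; first exact: reach_iter.
  - exact: sne.
  - by move=> x /hY /andP[hx _]; rewrite CP1x.
have r3 : reach (T (st r 3) (rev Y ++ 6 :: nseq i 6 ++ L) [:: 0])
                (T (st r 4) (nseq i 6 ++ L) (6 :: Y ++ [:: 9])) (size Y).+1.
  have := walkLm (h := bh) (dn := bdn) (q0 := st r 3) (a0 := 0) (b0 := 9) (q := st r 4)
            (g := id) (s := rev Y) (6 :: nseq i 6 ++ L) [::].
  rewrite map_id revK size_rev /= => <-; first exact: reach_iter.
  - exact: sne.
  - exact: sne.
  - exact: CP10.
  - by move=> x; rewrite mem_rev => /hY /andP[_ hx]; rewrite CP2x.
have r4 : reach (T (st r 4) (nseq i 6 ++ L) (6 :: Y ++ [:: 9]))
                (T (st r 2) (nseq i.+1 6 ++ L) (Y ++ [:: 9])) 1.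
  rewrite -(@step_R bh bdn (st r 4) _ 6 _ (st r 2) 6); first exact: reach_step.
  - exact: sne.
  - exact: CP26.
have e : Y ++ [:: 9] = nseq k 5 ++ 4 :: Mid ++ nseq c.+1 9.
  by rewrite /Y -catA /= -catA nseq_rcons.
rewrite -e.
apply: reach_mono (reach_trans r1 (reach_trans r2 (reach_trans r3 r4))).
rewrite /Y size_cat /= size_cat !size_nseq; lia.
Qed.

Lemma copy_loop L Mid i k c Z :
  (forall x, x \in Mid -> (x != 0) && (x != 6)) ->
  k + 1 + size Mid + c + k <= Z ->
  reach (T (st r 2) (nseq i 6 ++ L) (nseq k 5 ++ 4 :: Mid ++ nseq c 9))
        (T (st r 2) (nseq (i + k) 6 ++ L) (4 :: Mid ++ nseq (c + k) 9))
        (k * (2 * Z + 3)).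
Proof.
move=> hM; elim: k i c => [|k IH] i c hZ.
  by rewrite !addn0; exact: reach_refl.
rewrite -!addSnnS.
apply: reach_mono (reach_trans (copy_step L i k c hM) (IH i.+1 c.+1 _)); last by lia.
rewrite mulSn; nia.
Qed.

(* walk left from the A-zone back to the boundary, then start copying *)
Lemma goB q0 a0 b0 g rest :
  q0 != bh -> bdn q0 a0 = (st r 1, b0, false) ->
  reach (T q0 (nseq g 10 ++ 4 :: nseq b 5 ++ Lx) (a0 :: rest))
        (T (st r 2) Lx (nseq b 5 ++ 4 :: nseq g 10 ++ b0 :: rest)) (g + b + 3).
Proof.
move=> hq0 e0.
have := walkLm (h := bh) (dn := bdn) (q0 := q0) (a0 := a0) (b0 := b0) (q := st r 1)
          (g := id) (s := nseq g 10 ++ 4 :: nseq b 5) Lx rest.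
rewrite map_id -catA /= => h1.
have h2 : iter (size (nseq g 10 ++ 4 :: nseq b 5)).+1 (nstep bh bdn)
            (T q0 (nseq g 10 ++ 4 :: nseq b 5 ++ x0 :: L0) (a0 :: rest)) =
          T (st r 1) L0 (x0 :: rev (nseq g 10 ++ 4 :: nseq b 5) ++ b0 :: rest).
  apply: h1 => //; first exact: sne.
  move=> x; rewrite mem_cat inE => /or3P[/nseqP[-> _]|/eqP ->|/nseqP[-> _]]; by rewrite GOBx.
have r1 := reach_iter bh bdn (T q0 (nseq g 10 ++ 4 :: nseq b 5 ++ x0 :: L0) (a0 :: rest))
             (size (nseq g 10 ++ 4 :: nseq b 5)).+1.
rewrite h2 in r1.
have r2 : reach (T (st r 1) L0 (x0 :: rev (nseq g 10 ++ 4 :: nseq b 5) ++ b0 :: rest))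
                (T (st r 2) Lx (rev (nseq g 10 ++ 4 :: nseq b 5) ++ b0 :: rest)) 1.
  rewrite -(@step_R bh bdn (st r 1) L0 x0 _ (st r 2) x0); first exact: reach_step.
  - exact: sne.
  - exact: GOBb.
have e : rev (nseq g 10 ++ 4 :: nseq b 5) ++ b0 :: rest = nseq b 5 ++ 4 :: nseq g 10 ++ b0 :: rest.
  by rewrite rev_cat rev_cons !rev_nseq -cats1 -!catA.
rewrite -e; apply: reach_mono (reach_trans r1 r2).
rewrite size_cat /= !size_nseq; lia.
Qed.

(* after copying: restore B and go back to the boundary *)
Lemma restore rest :
  reach (T (st r 2) (nseq b 6 ++ Lx) (4 :: rest))
        (T (if r < K then st r 0 else fb d K) Lx (nseq b 5 ++ 4 :: rest)) (b + 2).
Proof.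
have := walkLm (h := bh) (dn := bdn) (q0 := st r 2) (a0 := 4) (b0 := 4) (q := st r 5)
          (g := fun _ => 5) (s := nseq b 6) Lx rest.
rewrite map_nseq rev_nseq size_nseq [behead _]/= [head _ _]/= => h1.
have r1 := reach_iter bh bdn (T (st r 2) (nseq b 6 ++ Lx) (4 :: rest)) b.+1.
rewrite h1 in r1; first last.
- by move=> x /nseqP[-> _]; rewrite RST6.
- exact: CP04.
- exact: sne.
- exact: sne.
have r2 : reach (T (st r 5) L0 (x0 :: nseq b 5 ++ 4 :: rest))
                (T (if r < K then st r 0 else fb d K) Lx (nseq b 5 ++ 4 :: rest)) 1.
  rewrite -(@step_R bh bdn (st r 5) L0 x0 _ _ x0); first exact: reach_step.
  - exact: sne.
  - by rewrite RSTx // x0ne6.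
by apply: reach_mono (reach_trans r1 r2); lia.
Qed.

Lemma iter_step g a c Z : r < K ->
  b + 1 + g.+1 + a + 1 + (c + b) <= Z ->
  reach (Can r g a.+1 c) (Can r g.+1 a (c + b)) ((b + 3) * (2 * Z + 3)).
Proof.
move=> hrK hZ.
have r1 := @goB (st r 0) 7 10 g (nseq a 7 ++ 11 :: nseq c 9) (sne (j := 0) isT) R07.
set Mid := nseq g.+1 10 ++ nseq a 7 ++ [:: 11].
have hM x : x \in Mid -> (x != 0) && (x != 6).
  by rewrite /Mid !mem_cat mem_seq1 => /or3P[/nseqP[-> _]|/nseqP[-> _]|/eqP ->].
have e1 : nseq b 5 ++ 4 :: nseq g 10 ++ 10 :: nseq a 7 ++ 11 :: nseq c 9 =
          nseq b 5 ++ 4 :: Mid ++ nseq c 9.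
  by rewrite /Mid -nseq_rcons -!catA.
rewrite e1 in r1.
have r2 := @copy_loop Lx Mid 0 b c Z hM.
rewrite add0n in r2.
have r3 := restore (Mid ++ nseq (c + b) 9).
rewrite hrK in r3.
set s' := nseq b 5 ++ 4 :: nseq g.+1 10.
have r4 : reach (T (st r 0) Lx (nseq b 5 ++ 4 :: Mid ++ nseq (c + b) 9))
                (Can r g.+1 a (c + b)) (size s').
  have := walkRm (h := bh) (dn := bdn) (q := st r 0) (g := id) (s := s') Lx
            (nseq a 7 ++ 11 :: nseq (c + b) 9).
  rewrite map_id.
  have -> : s' ++ nseq a 7 ++ 11 :: nseq (c + b) 9 = nseq b 5 ++ 4 :: Mid ++ nseq (c + b) 9.
    by rewrite /s' /Mid -!catA.
  have -> : rev s' ++ Lx = nseq g.+1 10 ++ 4 :: nseq b 5 ++ Lx.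
    by rewrite /s' rev_cat rev_cons !rev_nseq -cats1 -!catA.
  rewrite /Can; move=> <-; first exact: reach_iter.
  - exact: sne.
  - move=> x; rewrite mem_cat inE => /or3P[/nseqP[-> _]|/eqP ->|/nseqP[-> _]]; by rewrite R0x.
have r2' := r2 ltac:(rewrite /Mid size_cat size_cat !size_nseq /=; lia).
have h := reach_trans r1 (reach_trans r2' (reach_trans r3 r4)).
rewrite /Can /=; apply: reach_mono h.
rewrite /s' size_cat /= !size_nseq; nia.
Qed.


Lemma round_loop g a c Z : r < K ->
  b + 1 + (g + a) + 1 + (c + a * b) <= Z ->
  reach (Can r g a c) (Can r (g + a) 0 (c + a * b)) (a * ((b + 3) * (2 * Z + 3))).
Proof.
move=> hrK; elim: a g c => [|a IH] g c hZ.
  rewrite addn0 mul0n addn0 mul0n; exact: reach_refl.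
have h1 := @iter_step g a c Z hrK ltac:(nia).
have h2 := IH g.+1 (c + b) ltac:(nia).
have -> : g + a.+1 = g.+1 + a by lia.
have -> : c + a.+1 * b = c + b + a * b by rewrite mulSn; lia.
by apply: reach_mono (reach_trans h1 h2); rewrite mulSn.
Qed.

Lemma re_common G C :
  reach (Can r G 0 C) (T (st r 7) (nseq G 10 ++ 4 :: nseq b 5 ++ Lx) (10 :: nseq C 7 ++ [:: 11]))
        (2 * C + 2).
Proof.
have r1 : reach (Can r G 0 C) (T (st r 6) (10 :: nseq G 10 ++ 4 :: nseq b 5 ++ Lx) (nseq C 9 ++ [::])) 1.
  rewrite /Can cats0 -(@step_R bh bdn (st r 0) _ 11 _ (st r 6) 10); first exact: reach_step.
  - exact: sne.
  - exact: R011.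
have r2 : reach (T (st r 6) (10 :: nseq G 10 ++ 4 :: nseq b 5 ++ Lx) (nseq C 9 ++ [::]))
                (T (st r 6) (nseq C 7 ++ 10 :: nseq G 10 ++ 4 :: nseq b 5 ++ Lx) [:: 0]) C.
  have := walkRm (h := bh) (dn := bdn) (q := st r 6) (g := fun _ => 7) (s := nseq C 9)
            (10 :: nseq G 10 ++ 4 :: nseq b 5 ++ Lx) [::].
  rewrite map_nseq rev_nseq size_nseq T_nil => <-; first exact: reach_iter.
  - exact: sne.
  - by move=> x /nseqP[-> _]; rewrite RE19.
have r3 : reach (T (st r 6) (nseq C 7 ++ 10 :: nseq G 10 ++ 4 :: nseq b 5 ++ Lx) [:: 0])
                (T (st r 7) (nseq G 10 ++ 4 :: nseq b 5 ++ Lx) (10 :: nseq C 7 ++ [:: 11])) C.+1.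
  have := walkLm (h := bh) (dn := bdn) (q0 := st r 6) (a0 := 0) (b0 := 11) (q := st r 7)
            (g := id) (s := nseq C 7) (10 :: nseq G 10 ++ 4 :: nseq b 5 ++ Lx) [::].
  rewrite map_id rev_nseq size_nseq [behead _]/= [head _ _]/= => <-; first exact: reach_iter.
  - exact: sne.
  - exact: sne.
  - exact: RE10.
  - by move=> x /nseqP[-> _]; rewrite RE27.
by apply: reach_mono (reach_trans r1 (reach_trans r2 r3)); lia.
Qed.

End R.

Lemma round_next r G C : r.+1 < K ->
  reach (Can r G 0 C) (Can r.+1 G.+1 C 0) (2 * C + 3).
Proof.
move=> hrK.
have hr : r <= K by lia.
have r1 := re_common hr G C.
have r2 : reach (T (st r 7) (nseq G 10 ++ 4 :: nseq b 5 ++ Lx) (10 :: nseq C 7 ++ [:: 11]))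
                (Can r.+1 G.+1 C 0) 1.
  rewrite /Can -(@step_R bh bdn (st r 7) _ 10 _ (st r.+1 0) 10); first exact: reach_step.
  - exact: stne.
  - by rewrite RE210 // hrK.
by apply: reach_mono (reach_trans r1 r2); lia.
Qed.

Lemma round_last r G C Z : r.+1 = K ->
  2 * b + 2 + G.+1 + C <= Z ->
  reach (Can r G 0 C)
        (T (fb d K) Lx (nseq b 5 ++ 4 :: nseq G.+1 10 ++ nseq C 7 ++ 11 :: nseq b 9))
        (2 * C + 2 + (G + b + 3) + b * (2 * Z + 3) + (b + 2)).
Proof.
move=> hrK hZ.
have hr : r <= K by lia.
have r1 := re_common hr G C.
have r2 := @goB K (leqnn K) (st r 7) 10 10 G (nseq C 7 ++ [:: 11]) (@stne r 7 hr isT)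
             ltac:(by rewrite RE210 // hrK ltnn).
set Mid := nseq G.+1 10 ++ nseq C 7 ++ [:: 11].
have hM x : x \in Mid -> (x != 0) && (x != 6).
  by rewrite /Mid !mem_cat mem_seq1 => /or3P[/nseqP[-> _]|/nseqP[-> _]|/eqP ->].
have e1 : nseq b 5 ++ 4 :: nseq G 10 ++ 10 :: nseq C 7 ++ [:: 11] =
          nseq b 5 ++ 4 :: Mid ++ nseq 0 9.
  by rewrite /Mid -nseq_rcons -!catA.
rewrite e1 in r2.
have r3 := @copy_loop K (leqnn K) Lx Mid 0 b 0 Z hM
             ltac:(rewrite /Mid !size_cat !size_nseq /=; lia).
have r4 := @restore K (leqnn K) (Mid ++ nseq (0 + b) 9).
rewrite ltnn add0n in r3 r4.
have e2 : nseq b 5 ++ 4 :: Mid ++ nseq b 9 = nseq b 5 ++ 4 :: nseq G.+1 10 ++ nseq C 7 ++ 11 :: nseq b 9.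
  by rewrite /Mid -!catA.
rewrite e2 in r4.
apply: reach_mono (reach_trans r1 (reach_trans r2 (reach_trans r3 r4))); lia.
Qed.

End Bwd2.

End Bwd2.
Import Bwd2.

Module Bwd3.
Import Order.TTheory GRing.Theory Num.Theory.

Fixpoint Gs (b r : nat) : nat := if r is r'.+1 then Gs b r' + b ^ r' + 1 else 0.

Lemma Gs_mono b r s : r <= s -> Gs b r <= Gs b s.
Proof.
elim: s => [|s IH]; first by rewrite leqn0 => /eqP ->.
rewrite leq_eqVlt ltnS => /orP[/eqP -> //|/IH]; rewrite /=; lia.
Qed.

Section Bwd3.
Variables (d K' : nat) (N : TM).
Local Notation K := K'.+1.
Local Notation bh := (bh d K N).
Local Notation bdn := (bdn d K N).
Local Notation reach := (reach bh bdn).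
Variables (b : nat) (x0 : nat) (L0 : seq nat).
Hypothesis hx0 : (x0 == 3) || (x0 == 0).
Hypothesis hb : 0 < b.
Local Notation Lx := (x0 :: L0).
Local Notation Can := (Can d b x0 L0).

Definition Zb := 2 * b + 2 + Gs b K + b ^ K.
Definition RB := b ^ K * ((b + 3) * (2 * Zb + 3)) + 2 * b ^ K + 3.

Lemma pow_mono r s : r <= s -> b ^ r <= b ^ s.
Proof. by move=> h; apply: leq_pexp2l. Qed.

Lemma rounds_upto r : r <= K' ->
  reach (Can 0 0 1 0) (Can r (Gs b r) (b ^ r) 0) (r * RB).
Proof.
elim: r => [|r IH] hr; first exact: reach_refl.
have IH' := IH (ltnW hr).
have hrK : r < K by lia.
have hZ : b + 1 + (Gs b r + b ^ r) + 1 + (0 + b ^ r * b) <= Zb.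
  have h1 := Gs_mono b hrK.
  have h2 := pow_mono hrK.
  rewrite /Zb -expnSr /=; move: h1; rewrite /= => h1; lia.
have r1 := @round_loop d K N b x0 L0 hx0 r (ltnW hrK) (Gs b r) (b ^ r) 0 Zb hrK hZ.
have r2 := @round_next d K N b x0 L0 hx0 r (Gs b r + b ^ r) (0 + b ^ r * b) ltac:(lia).
rewrite add0n -expnSr in r1 r2.
have -> : Gs b r.+1 = (Gs b r + b ^ r).+1 by rewrite /=; lia.
apply: reach_mono (reach_trans IH' (reach_trans r1 r2)).
rewrite mulSn addnC leq_add2r /RB.
have h2 := pow_mono (ltnW hrK).
have h3 := pow_mono hrK.
rewrite -[X in _ <= X]addnA; apply: leq_add; first by apply: leq_mul.
lia.
Qed.

Definition Reg := nseq b 5 ++ 4 :: nseq (Gs b K) 10 ++ nseq (b ^ K) 7 ++ 11 :: nseq b 9.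

Lemma rounds_all :
  reach (Can 0 0 1 0) (T (fb d K) Lx Reg) (K * RB + (2 * Zb + 5) + b * (2 * Zb + 3)).
Proof.
have r1 := rounds_upto (leqnn K').
have hZ : b + 1 + (Gs b K' + b ^ K') + 1 + (0 + b ^ K' * b) <= Zb.
  by rewrite /Zb -expnSr /=; lia.
have r2 := @round_loop d K N b x0 L0 hx0 K' (leqnSn K') (Gs b K') (b ^ K') 0 Zb (ltnSn K') hZ.
rewrite add0n -expnSr in r1 r2.
have r3 := @round_last d K N b x0 L0 hx0 K' (Gs b K' + b ^ K') (b ^ K) Zb erefl
             ltac:(rewrite /Zb /=; lia).
have -> : Reg = nseq b 5 ++ 4 :: nseq (Gs b K' + b ^ K').+1 10 ++ nseq (b ^ K) 7 ++ 11 :: nseq b 9.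
  by rewrite /Reg /= addn1.
apply: reach_mono (reach_trans r1 (reach_trans r2 r3)).
have hZb : Gs b K' + b ^ K' + 2 * b + 2 <= Zb by rewrite /Zb /=; lia.
rewrite mulSnr /RB.
set X := (b + 3) * (2 * Zb + 3).
set Y := b * (2 * Zb + 3).
have hX : b ^ K' * X <= b ^ K * X by apply: leq_mul => //; apply: pow_mono.
lia.
Qed.

End Bwd3.

End Bwd3.
Import Bwd3.

Module Bwd4.
Import Order.TTheory GRing.Theory Num.Theory.

Section Bwd4.
Variables (d K : nat) (N : TM).
Local Notation bh := (bh d K N).
Local Notation bdn := (bdn d K N).
Local Notation reach := (reach bh bdn).
Local Notation fb := (fb d K).
Local Notation boff := (boff d K).

Lemma bdnF k a : k < 4 -> bdn (fb + k) a = fin d K k a.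
Proof. by move=> hk; rewrite bdn_prep ?bprep_fin // /boff; lia. Qed.

Lemma fne k : k < 4 -> fb + k != bh.
Proof. by move=> hk; apply: bq_ne; rewrite /boff; lia. Qed.

Lemma bdnF0 a : bdn fb a = fin d K 0 a.
Proof. by rewrite -[in LHS](addn0 fb) bdnF. Qed.

Lemma fne0 : fb != bh.
Proof. by rewrite -(addn0 fb) fne. Qed.

Lemma bdnP k a : k < 7 -> bdn (d + k) a = phase d k a.
Proof. by move=> hk; rewrite bdn_prep ?bprep_phase // /boff /fb /rb; lia. Qed.

Lemma pne k : k < 7 -> d + k != bh.
Proof. by move=> hk; apply: bq_ne; rewrite /boff /fb /rb; lia. Qed.

Variables (b x0 : nat) (L0 W : seq nat).
Hypothesis hW : (x0 = 0 /\ L0 = [::] /\ W = [::]) \/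
                (x0 = 3 /\ W = rev L0 ++ [:: 3] /\ (forall x, x \in L0 -> x != 0)).
Local Notation Lx := (x0 :: L0).

Lemma fin_phase Pre :
  (forall x, x \in Pre -> (x != 0) && (x != 3)) ->
  reach (T fb Lx (Pre ++ 11 :: nseq b 9))
        (T boff [:: 0] (W ++ nseq (size Pre) 2 ++ 3 :: nseq b 2 ++ [:: 0]))
        (2 * size Pre + 2 * b + size W + 5).
Proof.
move=> hP.
set Reg := Pre ++ 11 :: nseq b 9.
have r1 : reach (T fb Lx (Reg ++ [::])) (T fb (rev Reg ++ Lx) [:: 0]) (size Reg).
  have := walkRm (h := bh) (dn := bdn) (q := fb) (g := id) (s := Reg) Lx [::].
  rewrite map_id T_nil => <-; first exact: reach_iter.
  - exact: fne0.
  - move=> x; rewrite /Reg mem_cat in_cons => /or3P[/hP /andP[hx _]|/eqP ->|/nseqP[-> _]].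
    + by rewrite bdnF0 /= (negbTE hx).
    + by rewrite bdnF0.
    + by rewrite bdnF0.
rewrite cats0 in r1.
have eR : rev Reg ++ Lx = nseq b 9 ++ 11 :: rev Pre ++ Lx.
  by rewrite /Reg rev_cat rev_cons rev_nseq -cats1 -!catA.
rewrite eR in r1.
have r2 : reach (T fb (nseq b 9 ++ 11 :: rev Pre ++ Lx) [:: 0])
                (T (fb + 1) (rev Pre ++ Lx) (11 :: nseq b 2 ++ [:: 0])) b.+1.
  have := walkLm (h := bh) (dn := bdn) (q0 := fb) (a0 := 0) (b0 := 0) (q := fb + 1)
            (g := fun _ => 2) (s := nseq b 9) (11 :: rev Pre ++ Lx) [::].
  rewrite map_nseq rev_nseq size_nseq [behead _]/= [head _ _]/= => <-; first exact: reach_iter.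
  - exact: fne0.
  - exact: fne.
  - by rewrite bdnF0.
  - by move=> x /nseqP[-> _]; rewrite bdnF.
have r3 : reach (T (fb + 1) (rev Pre ++ Lx) (11 :: nseq b 2 ++ [:: 0]))
                (T (fb + 2) L0 (x0 :: nseq (size Pre) 2 ++ 3 :: nseq b 2 ++ [:: 0])) (size Pre).+1.
  have := walkLm (h := bh) (dn := bdn) (q0 := fb + 1) (a0 := 11) (b0 := 3) (q := fb + 2)
            (g := fun _ => 2) (s := rev Pre) Lx (nseq b 2 ++ [:: 0]).
  have -> : rev (map (fun=> 2) (rev Pre)) = nseq (size Pre) 2.
    by rewrite map_rev revK; elim: (Pre) => //= y s ->.
  rewrite size_rev [behead _]/= [head _ _]/= => <-; first exact: reach_iter.
  - exact: fne.
  - exact: fne.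
  - by rewrite bdnF.
  - move=> x; rewrite mem_rev => /hP /andP[h0 h3].
    by rewrite bdnF //= (negbTE h3) (negbTE h0).
have r4 : reach (T (fb + 2) L0 (x0 :: nseq (size Pre) 2 ++ 3 :: nseq b 2 ++ [:: 0]))
                (T boff [:: 0] (W ++ nseq (size Pre) 2 ++ 3 :: nseq b 2 ++ [:: 0])) (size W).+1.
  case: hW => [[-> [-> ->]]|[-> [-> hL]]].
    rewrite -(@step_R bh bdn (fb + 2) [::] 0 _ boff 0); first exact: reach_step.
    - exact: fne.
    - by rewrite bdnF.
  have := walkLm (h := bh) (dn := bdn) (q0 := fb + 2) (a0 := 3) (b0 := 3) (q := fb + 3)
            (g := id) (s := L0) [::] (nseq (size Pre) 2 ++ 3 :: nseq b 2 ++ [:: 0]).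
  rewrite map_id cats0 [behead _]/= [head _ _]/= => h.
  have r5 := reach_iter bh bdn (T (fb + 2) L0 (3 :: nseq (size Pre) 2 ++ 3 :: nseq b 2 ++ [:: 0]))
               (size L0).+1.
  rewrite h in r5; first last.
  - by move=> x /hL hx; rewrite bdnF //= (negbTE hx).
  - by rewrite bdnF.
  - exact: fne.
  - exact: fne.
  have r6 : reach (T (fb + 3) [::] (0 :: rev L0 ++ 3 :: nseq (size Pre) 2 ++ 3 :: nseq b 2 ++ [:: 0]))
                  (T boff [:: 0] (rev L0 ++ 3 :: nseq (size Pre) 2 ++ 3 :: nseq b 2 ++ [:: 0])) 1.
    rewrite -(@step_R bh bdn (fb + 3) [::] 0 _ boff 0); first exact: reach_step.
    - exact: fne.
    - by rewrite bdnF.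
  rewrite -catA /=.
  by apply: reach_mono (reach_trans r5 r6); rewrite size_cat size_rev /=; lia.
apply: reach_mono (reach_trans r1 (reach_trans r2 (reach_trans r3 r4))).
rewrite /Reg size_cat /= size_nseq; lia.
Qed.

End Bwd4.

Section PH1.
Variables (d K : nat) (N : TM).
Local Notation bh := (bh d K N).
Local Notation bdn := (bdn d K N).
Local Notation reach := (reach bh bdn).

Lemma T_hb q l rs : T q l rs = T q l (head 0 rs :: behead rs).
Proof. by case: rs. Qed.

Lemma bdnP0 a : bdn d a = phase d 0 a.
Proof. by have := bdnP d K N a (isT : 0 < 7); rewrite addn0. Qed.

Lemma pne0 : d != bh.
Proof. by have := pne d K N (isT : 0 < 7); rewrite addn0. Qed.

Lemma ph1 (ms : seq nat) p : size ms = d ->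
  reach (T 0 [::] (Wenc ms ++ nseq p 2))
        (Can d p.+2 (head 0 (rev (Wenc ms))) (behead (rev (Wenc ms))) 0 0 1 0)
        (size (Wenc ms) + p + 7).
Proof.
move=> hms.
set W := Wenc ms.
set x0 := head 0 (rev W); set L0 := behead (rev W).
have r1 : reach (T 0 [::] (W ++ nseq p 2)) (T d (rev W ++ [::]) (nseq p 2)) (size W).
  have := @skip_phase bh bdn d 0 ms [::] (nseq p 2).
  rewrite add0n hms => <-; first exact: reach_iter.
  - by rewrite /Bwd.bh /boff /fb /rb; lia.
  - by move=> q a hq; rewrite bdn_prep /bprep ?hq // /boff /fb /rb; lia.
  - by rewrite ?hms.
have r2 : reach (T d (rev W ++ [::]) (nseq p 2)) (T (d + 2) (x0 :: L0) (nseq p 2)) 2.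
  exists 2 => //.
  rewrite cats0 T_hb iterSr (@step_L _ _ _ _ _ _ (d + 1) (head 0 (nseq p 2))); last first.
  - by rewrite bdnP0.
  - exact: pne0.
  rewrite iter1 (@step_R _ _ _ _ _ _ (d + 2) x0); last first.
  - by rewrite (bdnP d K N).
  - exact: (pne d K N).
  by rewrite -T_hb.
have r3 : reach (T (d + 2) (x0 :: L0) (nseq p 2 ++ [::])) (T (d + 2) (nseq p 5 ++ x0 :: L0) [::]) p.
  have := walkRm (h := bh) (dn := bdn) (q := d + 2) (g := fun _ => 5) (s := nseq p 2) (x0 :: L0) [::].
  rewrite map_nseq rev_nseq size_nseq => <-; first exact: reach_iter.
  - exact: (pne d K N).
  - by move=> x /nseqP[-> _]; rewrite (bdnP d K N).
rewrite cats0 in r3.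
have r4 : reach (T (d + 2) (nseq p 5 ++ x0 :: L0) [::])
                (T (Bwd.st d 0 0) (4 :: nseq p.+2 5 ++ x0 :: L0) [:: 7; 11]) 5.
  exists 5 => //.
  rewrite iterSr T_nil (@step_R _ _ _ _ _ _ (d + 3) 5); [|exact: (pne d K N)|by rewrite (bdnP d K N)].
  rewrite iterSr T_nil (@step_R _ _ _ _ _ _ (d + 4) 5); [|exact: (pne d K N)|by rewrite (bdnP d K N)].
  rewrite iterSr T_nil (@step_R _ _ _ _ _ _ (d + 5) 4); [|exact: (pne d K N)|by rewrite (bdnP d K N)].
  rewrite iterSr T_nil (@step_R _ _ _ _ _ _ (d + 6) 7); [|exact: (pne d K N)|by rewrite (bdnP d K N)].
  rewrite iter1 T_nil (@step_L _ _ _ _ _ _ (Bwd.st d 0 0) 11); [|exact: (pne d K N)|by rewrite (bdnP d K N)].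
  by [].
by apply: reach_mono (reach_trans r1 (reach_trans r2 (reach_trans r3 r4))); lia.
Qed.

End PH1.

End Bwd4.
Import Bwd4.

Module Bwd5.
Import Order.TTheory GRing.Theory Num.Theory.

Lemma Wenc_nz s x : x \in Wenc s -> x != 0.
Proof.
rewrite /Wenc => /flattenP[t /mapP[m _ ->]]; rewrite mem_cat => /orP[/enc_bin_small|].
  by case: x.
by rewrite inE => /eqP ->.
Qed.

Lemma Wenc_shape s : Wenc s = [::] \/ exists W', Wenc s = rcons W' 3.
Proof.
case/lastP: s => [|s m]; first by left.
right; exists (Wenc s ++ enc_bin m).
by rewrite /Wenc map_rcons flatten_rcons -/(Wenc s) -cats1 -!catA.
Qed.

Lemma hW_of s :
  let W := Wenc s in
  (head 0 (rev W) = 0 /\ behead (rev W) = [::] /\ W = [::]) \/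
  (head 0 (rev W) = 3 /\ W = rev (behead (rev W)) ++ [:: 3] /\
   (forall x, x \in behead (rev W) -> x != 0)).
Proof.
case: (Wenc_shape s) => [->|[W' e]] /=; first by left.
right; rewrite e rev_rcons /= revK cats1; split=> //; split=> // x hx.
by apply: (@Wenc_nz s); rewrite e mem_rcons inE -mem_rev hx orbT.
Qed.

Lemma hx0_of s : (head 0 (rev (Wenc s)) == 3) || (head 0 (rev (Wenc s)) == 0).
Proof. by case: (hW_of s) => [[-> _]|[-> _]]. Qed.

Lemma pre_ok b G C (x : nat) : x \in nseq b 5 ++ 4 :: nseq G 10 ++ nseq C 7 -> (x != 0) && (x != 3).
Proof. by rewrite mem_cat in_cons mem_cat => /or4P[/nseqP[-> _]|/eqP ->|/nseqP[-> _]|/nseqP[-> _]]. Qed.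

Definition npr (b K : nat) := b + 1 + Gs b K + b ^ K.

Lemma prep_total d K' N (ms : seq nat) p : size ms = d ->
  reach (bh d K'.+1 N) (bdn d K'.+1 N) (T 0 [::] (Wenc ms ++ nseq p 2))
    (T (boff d K'.+1) [:: 0] (Wenc ms ++ nseq (npr p.+2 K'.+1) 2 ++ 3 :: nseq p.+2 2 ++ [:: 0]))
    ((size (Wenc ms) + p + 7) +
     (K'.+1 * RB K' p.+2 + (2 * Zb K' p.+2 + 5) + p.+2 * (2 * Zb K' p.+2 + 3)) +
     (2 * npr p.+2 K'.+1 + 2 * p.+2 + size (Wenc ms) + 5)).
Proof.
move=> hms.
have r1 := @ph1 d K'.+1 N ms p hms.
have r2 := @rounds_all d K' N p.+2 _ _ (hx0_of ms) isT.
set Pre := nseq p.+2 5 ++ 4 :: nseq (Gs p.+2 K'.+1) 10 ++ nseq (p.+2 ^ K'.+1) 7.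
have eR : Reg K' p.+2 = Pre ++ 11 :: nseq p.+2 9.
  by rewrite /Reg /Pre -catA /= -catA.
rewrite eR in r2.
have hP := @pre_ok p.+2 (Gs p.+2 K'.+1) (p.+2 ^ K'.+1).
have r3 := @fin_phase d K'.+1 N p.+2 _ _ _ (hW_of ms) Pre hP.
have hs : size Pre = npr p.+2 K'.+1 by rewrite /Pre /npr size_cat /= size_cat !size_nseq; lia.
rewrite hs in r3.
apply: reach_mono (reach_trans r1 (reach_trans (r2 _) r3)); lia.
Qed.

End Bwd5.
Import Bwd5.

Module Arith.

Lemma expn_monoL m n e : m <= n -> m ^ e <= n ^ e.
Proof. by move=> h; elim: e => // e IH; rewrite !expnS leq_mul. Qed.

Lemma Gs_le b r : 0 < b -> Gs b r <= r * (b ^ r + 1).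
Proof.
move=> hb; elim: r => //= r IH.
have h : b ^ r <= b ^ r.+1 by apply: leq_pexp2l.
have h2 : r * (b ^ r + 1) <= r * (b ^ r.+1 + 1) by rewrite leq_mul2l leq_add2r h orbT.
rewrite mulSn; move: IH h h2; move: (r * (b ^ r + 1)) (r * (b ^ r.+1 + 1)) => x y; lia.
Qed.

Lemma bwd_time (d K' cN : nat) : exists c, forall B p tN,
  tN <= cN * (B + npr p.+2 K'.+1 + p.+2).+1 ^ cN ->
  ((B + d) + p + 7) +
  (K'.+1 * RB K' p.+2 + (2 * Zb K' p.+2 + 5) + p.+2 * (2 * Zb K' p.+2 + 3)) +
  (2 * npr p.+2 K'.+1 + 2 * p.+2 + (B + d) + 5) + tN <= c * (B + p).+1 ^ c.
Proof.
set K := K'.+1.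
set A := (2 * K + 6 + d) * 2 ^ K.
set E := 3 * K + K * cN.
set C := (25 * K + 30) * A ^ 3 + cN * (3 * A) ^ cN.
exists (C + E) => B p tN htN.
set b := p.+2.
set X := (B + p).+1.
set V := b ^ K.
have hX : 0 < X by [].
have hb : 0 < b by [].
have hV1 : 1 <= V by rewrite expn_gt0.
have hbV : b <= V by rewrite -{1}(expn1 b); apply: leq_pexp2l.
have hG : Gs b K <= K * (V + 1) by apply: Gs_le.
have hZ : Zb K' b <= (2 * K + 5) * V.
  have hK : K <= K * V by rewrite leq_pmulr.
  rewrite /Zb -/K -/V mulnDl -mulnA; move: hG; rewrite mulnDr muln1.
  move: (K * V) hK => KV hK hG; lia.
have hn : npr b K <= Zb K' b by rewrite /npr /Zb -/K; lia.
set U := (2 * K + 5) * V + B + d + p + 1.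
have hU1 : 1 <= U by lia.
have hZU : Zb K' b <= U by lia.
have hVU : V <= U.
  have : V <= (2 * K + 5) * V by rewrite leq_pmull.
  rewrite /U; move: ((2 * K + 5) * V) => T; lia.
have hbU : b <= U by lia.
have hXU : X <= U by rewrite /X; lia.
have hRB : RB K' b <= 25 * U ^ 3.
  rewrite /RB -/K -/V.
  have h1 : V * ((b + 3) * (2 * Zb K' b + 3)) <= U * ((U + 3) * (2 * U + 3)).
    by apply: leq_mul => //; apply: leq_mul; lia.
  have h2 : U * ((U + 3) * (2 * U + 3)) <= 20 * (U * (U * U)).
    have e : U * ((4 * U) * (5 * U)) = 20 * (U * (U * U)) by rewrite mulnACA [in LHS]mulnCA.
    rewrite -e; apply: leq_mul => //; apply: leq_mul; lia.
  have h3 : U <= U * (U * U) by rewrite mulnA leq_pmull // muln_gt0 hU1.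
  have e3 : U ^ 3 = U * (U * U) by rewrite !expnS expn0 muln1.
  rewrite e3; move: h1 h2 h3; move: (U * (U * U)) (V * ((b + 3) * (2 * Zb K' b + 3))) => t x.
  clearbody U V; lia.
have hB1 : ((B + d) + p + 7) +
  (K * RB K' b + (2 * Zb K' b + 5) + b * (2 * Zb K' b + 3)) +
  (2 * npr b K + 2 * b + (B + d) + 5) <= (25 * K + 30) * U ^ 3.
  have h3 : U <= U ^ 3 by rewrite -{1}(expn1 U); apply: leq_pexp2l.
  have h3' : U * U <= U ^ 3 by rewrite !expnS expn0 muln1 mulnA leq_pmulr.
  have h4 : b * (2 * Zb K' b + 3) <= U * (5 * U) by apply: leq_mul; lia.
  have h5 : K * RB K' b <= K * (25 * U ^ 3) by apply: leq_mul.
  have hsmall : ((B + d) + p + 7) + (2 * Zb K' b + 5) + (2 * npr b K + 2 * b + (B + d) + 5) <= 24 * U.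
    by lia.
  move: h3 h3' h4 h5 hsmall; set W3 := U ^ 3 => h3 h3' h4 h5 hsmall.
  rewrite mulnCA in h4; rewrite mulnCA in h5.
  have h4' : b * (2 * Zb K' b + 3) <= 5 * W3 by apply: leq_trans h4 _; rewrite leq_mul2l h3' orbT.
  rewrite mulnDl; clearbody W3 U; move: (K * RB K' b) (b * (2 * Zb K' b + 3)) h5 h4' => KR bZ h5 h4'; rewrite -mulnA; lia.
have htN' : tN <= cN * (3 * U) ^ cN.
  apply: leq_trans htN _; apply: leq_mul => //; apply: expn_monoL.
  rewrite -/b; move: hn hZU hbU hXU; rewrite /X; clearbody U b; lia.
have hXK : X <= X ^ K by rewrite -{1}(expn1 X); apply: leq_pexp2l.
have hVX : V <= 2 ^ K * X ^ K by rewrite -expnMn; apply: expn_monoL; rewrite /b /X; lia.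
have h1XK : 1 <= 2 ^ K * X ^ K by rewrite muln_gt0 !expn_gt0.
have hUA : U <= A * X ^ K.
  rewrite /A -mulnA.
  have hY1 := h1XK.
  have hXY : X <= 2 ^ K * X ^ K by apply: leq_trans hXK _; rewrite leq_pmull // expn_gt0.
  move: hVX hY1 hXY; move: (2 ^ K * X ^ K) => Y hVY hY1 hXY.
  have h1 : (2 * K + 5) * V <= (2 * K + 5) * Y by apply: leq_mul.
  have h2 : d <= d * Y by rewrite leq_pmulr.
  rewrite /U !mulnDl -mulnA; rewrite !mulnDl -mulnA in h1.
  move: h1 h2 hXY; rewrite /X; move: (K * Y) (d * Y) (K * V) => a1 a2 a3; clearbody U; lia.
have hfin : (25 * K + 30) * U ^ 3 + cN * (3 * U) ^ cN <= C * X ^ E.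
  clearbody A.
  have hU3 : U ^ 3 <= A ^ 3 * X ^ (3 * K).
    by rewrite (mulnC 3 K) expnM -expnMn; apply: expn_monoL.
  have hUc : (3 * U) ^ cN <= (3 * A) ^ cN * X ^ (K * cN).
    by rewrite expnM -expnMn; apply: expn_monoL; rewrite -mulnA leq_mul2l hUA orbT.
  have hx1 : 0 < X ^ (3 * K) by rewrite expn_gt0.
  have hx2 : 0 < X ^ (K * cN) by rewrite expn_gt0.
  rewrite /C /E expnD [X in _ <= X]mulnDl.
  apply: leq_add.
    rewrite -mulnA leq_mul2l; apply/orP; right.
    by apply: leq_trans hU3 _; rewrite mulnA; apply: leq_pmulr.
  rewrite -mulnA leq_mul2l; apply/orP; right.
  by apply: leq_trans hUc _; rewrite mulnCA; apply: leq_pmull.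
have hCE : C * X ^ E <= (C + E) * X ^ (C + E).
  apply: leq_mul; first exact: leq_addr.
  by apply: leq_pexp2l => //; apply: leq_addl.
rewrite -/K -/b -/X.
apply: leq_trans hCE; apply: leq_trans hfin.
by apply: leq_add.
Qed.

Lemma poly_le cs x : 0 < x ->
  \sum_(i < size cs) nth 0 cs i * x ^ i <= sumn cs * x ^ size cs.
Proof.
move=> hx; elim: cs => [|c cs IH]; first by rewrite big_ord0.
rewrite big_ord_recl /= expn0 muln1.
have e : \sum_(i < size cs) nth 0 (c :: cs) (lift ord0 i) * x ^ (lift ord0 i) =
         x * \sum_(i < size cs) nth 0 cs i * x ^ i.
  by rewrite big_distrr /=; apply: eq_bigr => i _; rewrite /= expnS mulnCA.
rewrite e.
have h1 : x * \sum_(i < size cs) nth 0 cs i * x ^ i <= x * (sumn cs * x ^ size cs).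
  by rewrite leq_mul2l IH orbT.
have h2 : c <= c * x ^ (size cs).+1 by rewrite leq_pmulr // expn_gt0 hx.
rewrite mulnDl; apply: leq_add => //.
by rewrite expnS mulnCA.
Qed.

Lemma poly_lt cs x : 0 < x ->
  \sum_(i < size cs) nth 0 cs i * x ^ i < (x + 1) ^ (size cs + sumn cs).+1.
Proof.
move=> hx; apply: leq_ltn_trans (poly_le cs hx) _.
have h1 : x ^ size cs <= (x + 1) ^ size cs by apply: expn_monoL; lia.
rewrite -addnS expnD.
apply: (@leq_ltn_trans (sumn cs * (x + 1) ^ size cs)); first by rewrite leq_mul2l h1 orbT.
rewrite [X in _ < X]mulnC ltn_pmul2r ?expn_gt0 ?addn1 //.
have h2 : 1 < x.+1 by [].
apply: leq_trans (ltn_expl (sumn cs) h2) _.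
by apply: leq_pexp2l.
Qed.

End Arith.
Import Arith.

Module Bwd6.
Import Order.TTheory GRing.Theory Num.Theory.

Local Open Scope ring_scope.

Lemma pow2_sum (R : realFieldType) p :
  (2%:R ^+ p.+2 : R)^-1 + (2%:R ^+ p.+1)^-1 <= (2%:R ^+ p)^-1.
Proof.
have hx : 0 <= (2%:R ^+ p : R)^-1 by rewrite invr_ge0 exprn_ge0.
rewrite !exprS !invfM; move: hx; set x := (2%:R ^+ p : R)^-1 => hx.
have h2 : (2%:R : R)^-1 = 1 / 2 by rewrite div1r.
rewrite h2; lra.
Qed.

Lemma backward (R : realType) (d d' : nat) (F : d.-tuple nat -> 'I_d' -> R) :
  (exists (f : d.-tuple nat -> nat -> 'I_d' -> rat)
         (g : d.-tuple nat -> nat -> rat),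
    ptime_computable_unary R f /\
    (forall m n, supnorm (fun i => ratr (f m n i) - F m i) <= ratr (g m n)) /\
    (forall m n, 0 <= g m n) /\
    (forall m, tends_to_zero (g m)) /\
    (exists p : nat -> nat, is_nat_poly p /\ uniform_modulus g p)) ->
  ptime_computable F.
Proof.
case=> f [g [[N [cN Hf]] [Hb [Hpos [_ [P [[cs hP] modP]]]]]]].
set K' := (size cs + sumn cs)%N.
have [c hc] := bwd_time d K' cN.
exists (bM d K'.+1 N), c => ms us p.
set b := p.+2; set n' := npr b K'.+1.
have [tN [qs [htN [hrun hsup]]]] := Hf ms [tuple n'] b.
exists (c * (input_size ms us p).+1 ^ c)%N, qs; split=> //; split.
- rewrite enc_input0; rewrite enc_input1 in hrun.
  have et : tnth [tuple n'] ord0 = n' by [].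
  rewrite et in hrun.
  have hp := @prep_total d K' N ms p (size_tuple ms).
  have e : (Wenc ms ++ nseq (npr p.+2 K'.+1) 2 ++ 3 :: nseq p.+2 2 ++ [:: 0] =
           (Wenc ms ++ nseq n' 2 ++ 3 :: nseq b 2) ++ nseq 1 0)%N by rewrite -!catA.
  rewrite e in hp.
  apply: (@combine_runs (bns N) (boff d K'.+1) (bprep d K'.+1) N
            (Wenc ms ++ nseq n' 2%N ++ 3%N :: nseq b 2%N) _ _ _ _ tN _ _ _ _ _ _ hp _ hrun).
  + exact: bdn_ok.
  + by apply: small_lt; rewrite !small_cat small_Wenc small_nseq //=; exact: small_nseq.
  + by apply: small_lt; rewrite small_cat small_Wenc small_nseq.
  + by apply: small_lt; exact: small_dyadics.
  + by apply: small_lt; exact: small_dyadics.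
  + exact: ceq_start.
  + rewrite isize0 size_Wenc size_tuple.
    rewrite isize1 in htN.
    exact: hc.
-
  apply: supnorm_leP; first by rewrite invr_ge0 exprn_ge0.
  move=> i.
  have h1 : `|dy_val R (tnth qs i) - ratr (f ms n' i)| <= (2%:R ^+ b)^-1.
    exact: le_trans (supnorm_ge _ i) hsup.
  have h2 : `|ratr (f ms n' i) - F ms i| <= ratr (g ms n').
    exact: le_trans (supnorm_ge _ i) (Hb ms n').
  have hPn : (P p.+1 < n')%N.
    rewrite hP; apply: leq_trans (poly_lt cs (isT : (0 < p.+1)%N)) _.
    by rewrite /n' /npr addn1 leq_addl.
  have h3 : g ms n' <= (2%:R ^+ p.+1)^-1.
    by have := modP ms p.+1 n' hPn; rewrite ger0_norm // Hpos.
  have h3' : ratr (g ms n') <= (2%:R ^+ p.+1 : R)^-1.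
    by rewrite -(ratr_pow2inv R p.+1) ler_rat.
  apply: le_trans (pow2_sum R p).
  have e : dy_val R (tnth qs i) - F ms i =
           (dy_val R (tnth qs i) - ratr (f ms n' i)) + (ratr (f ms n' i) - F ms i).
    by rewrite addrA subrK.
  rewrite e; apply: le_trans (ler_normD _ _) _; apply: lerD => //.
  exact: le_trans h2 h3'.
Qed.

End Bwd6.
Import Bwd6.


Local Open Scope ring_scope.

Theorem mainTheorem12 (R : realType) (d d' : nat)
  (F : d.-tuple nat -> 'I_d' -> R) :
  ptime_computable F <->
  exists (f : d.-tuple nat -> nat -> 'I_d' -> rat)
         (g : d.-tuple nat -> nat -> rat),
    ptime_computable_unary R f /\
    (forall m n, supnorm (fun i => ratr (f m n i) - F m i) <= ratr (g m n)) /\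
    (forall m n, 0 <= g m n) /\
    (forall m, tends_to_zero (g m)) /\
    (exists p : nat -> nat, is_nat_poly p /\ uniform_modulus g p).
Proof.
split; [exact: forward | exact: backward].
Qed.
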